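(* Assume Conditions A and B, and assume at least one of the following: (a) $a>-\infty$ is a natural boundary and for some $z\in\mathcal E$, $\liminf_{y\to a}\frac{c_1(y,z)-g_0(y)}{\zeta(y)}=0$; (b) $b<\infty$ is a natural boundary and for some $y\in\mathcal E$, $\liminf_{z\to b}\frac{c_1(y,z)+g_0(z)}{\zeta(z)}=0$; (c) $a>-\infty$ is natural, $c_0(a)=0$ and $\liminf_{(y,z)\to(a,a),\,y<z}\frac{c_1(y,z)}{\zeta(z)-\zeta(y)}=0$; (d) $b<\infty$ is natural, $c_0(b)=0$ and $\liminf_{(y,z)\to(b,b),\,y<z}\frac{c_1(y,z)}{\zeta(z)-\zeta(y)}=0$. Then $F_0^*=0$ and no pair $(y,z)\in\mathcal R$ minimizes $F_0$.
   Context: Setting. $\mathcal I=(a,b)$, $-\infty\le a<b\le\infty$; $\mu,\sigma$ continuous on $\mathcal I$, $\sigma\neq0$; $X_0$ the regular diffusion $dX_0=\mu(X_0)dt+\sigma(X_0)dW$, $X_0(0)=x_0\in\mathcal I$. Scale density $s(x)=\exp(-\int^x2\mu/\sigma^2)$, scale function $S=\int s$, $S[y,z]=S(z)-S(y)$ ($dS$), speed density $m=1/(\sigma^2s)$, speed measure $M[y,z]=\int_y^z m$ ($dM$). Feller boundary classification; attainable means regular or exit. Condition A: $S(a,x]<\infty$, $S[x,b)=\infty$ for $x\in\mathcal I$ (so $a$ is regular/exit/natural, $b$ natural/entrance); if $a$ reflecting, $\lim_{x\to a}s(x)M[x,b)<\infty$; if $b$ natural, $M[y,b)<\infty$ for $y\in\mathcal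 I$; infinite boundaries are natural. $\mathcal E$ is $\mathcal I$ with $a$ added if attainable and $b$ added if entrance; $\mathcal R=\{(y,z)\in\mathcal E^2:y<z\}$, $\overline{\mathcal R}=\{(y,z)\in\mathcal E^2:y\le z\}$. Condition B: (a) $c_0:\mathcal E\to[0,\infty)$ continuous; at natural boundaries $c_0(a)=\lim_{x\to a}c_0(x)$, $c_0(b)=\lim_{x\to b}c_0(x)$ exist in $[0,\infty]$, with $c_0(\pm\infty)=\infty$ at infinite boundaries; $\int_y^bc_0\,dM<\infty$ for $y\in\mathcal I$; if $a$ reflecting, $\lim_{x\to a}s(x)\int_x^bc_0\,dM<\infty$. (b) $c_1:\overline{\mathcal R}\to[0,\infty]$ continuous, $c_1\ge k_1>0$, $c_1(\cdot,z)$ is $C^1$ near $a$ for $z\in\mathcal E\setminus\{a\}$, $c_1(y,\cdot)$ is $C^1$ near $b$ for $y\in\mathcal E\setminus\{b\}$. Functions: $g_0(x)=\int_{x_0}^x\int_u^b2c_0(v)\,dM(v)\,dS(u)$, $\zeta(x)=\int_{x_0}^x2M[u,b)\,dS(u)$ on $\mathcal I$, extended by continuity (possibly to $\pm\infty$). $F_0(y,z)=\frac{c_1(y,z)+g_0(z)-g_0(y)}{\zeta(z)-\zeta(y)}$ for $(y,z)\in\mathcal R$, $F_0(y,y)=\infty$, and $F_0^*=\inf_{\overline{\mathcal R}}F_0$. *)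

(* Defs.v *)
From Stdlib Require Import Reals Lra Classical ClassicalEpsilon.
Open Scope R_scope.

Inductive Rbar : Type := Fin (r : R) | PInf | MInf.

Definition Rbar_le (x y : Rbar) : Prop :=
  match x, y with
  | MInf, _ => True
  | Fin _, MInf => False
  | Fin a, Fin b => a <= b
  | Fin _, PInf => True
  | PInf, PInf => True
  | PInf, _ => False
  end.

Definition Rbar_lt (x y : Rbar) : Prop :=
  match x, y with
  | MInf, MInf => False
  | MInf, _ => True
  | Fin _, MInf => False
  | Fin a, Fin b => a < b
  | Fin _, PInf => True
  | PInf, _ => False
  end.

Definition is_finite (x : Rbar) : Prop := exists r : R, x = Fin r.

(* real part; only applied to values known to be finite *)
Definition Rbar_real (x : Rbar) : R :=
  match x with Fin r => r | _ => 0 end.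

Definition Rbar_opp (x : Rbar) : Rbar :=
  match x with Fin r => Fin (- r) | PInf => MInf | MInf => PInf end.

(* addition; the undefined form (+oo) + (-oo) is given the arbitrary value 0 *)
Definition Rbar_plus (x y : Rbar) : Rbar :=
  match x, y with
  | Fin a, Fin b => Fin (a + b)
  | PInf, MInf => Fin 0
  | MInf, PInf => Fin 0
  | PInf, _ => PInf
  | _, PInf => PInf
  | MInf, _ => MInf
  | _, MInf => MInf
  end.

Definition Rbar_minus (x y : Rbar) : Rbar := Rbar_plus x (Rbar_opp y).

Definition Rbar_scal_pos (r : R) (x : Rbar) : Rbar :=
  match x with Fin a => Fin (r * a) | PInf => PInf | MInf => MInf end.

(* division; undefined forms (oo/oo, x/0) get arbitrary values *)
Definition Rbar_div (x y : Rbar) : Rbar :=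
  match y with
  | Fin d =>
      match x with
      | Fin a => Fin (a / d)
      | PInf => if Rlt_dec 0 d then PInf else if Rlt_dec d 0 then MInf else Fin 0
      | MInf => if Rlt_dec 0 d then MInf else if Rlt_dec d 0 then PInf else Fin 0
      end
  | _ => Fin 0
  end.

Definition is_lub_Rbar (E : Rbar -> Prop) (l : Rbar) : Prop :=
  (forall x, E x -> Rbar_le x l) /\
  (forall u, (forall x, E x -> Rbar_le x u) -> Rbar_le l u).
Definition is_glb_Rbar (E : Rbar -> Prop) (l : Rbar) : Prop :=
  (forall x, E x -> Rbar_le l x) /\
  (forall u, (forall x, E x -> Rbar_le u x) -> Rbar_le u l).

Definition Rbar_sup (E : Rbar -> Prop) : Rbar := epsilon (inhabits PInf) (is_lub_Rbar E).
Definition Rbar_inf (E : Rbar -> Prop) : Rbar := epsilon (inhabits PInf) (is_glb_Rbar E).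

Definition Rnbhd (p : Rbar) (P : R -> Prop) : Prop :=
  match p with
  | Fin l => exists eps, 0 < eps /\ forall x, Rabs (x - l) < eps -> P x
  | PInf => exists M, forall x, M < x -> P x
  | MInf => exists M, forall x, x < M -> P x
  end.

Definition Rnbhd2 (y z : R) (P : R * R -> Prop) : Prop :=
  exists eps, 0 < eps /\
    forall u v, Rabs (u - y) < eps -> Rabs (v - z) < eps -> P (u, v).

Definition Rbar_nbhd (L : Rbar) (Q : Rbar -> Prop) : Prop :=
  match L with
  | Fin l => exists eps, 0 < eps /\ forall r, Rabs (r - l) < eps -> Q (Fin r)
  | PInf => exists M, forall x, Rbar_lt (Fin M) x -> Q x
  | MInf => exists M, forall x, Rbar_lt x (Fin M) -> Q x
  end.

Definition filterlim {T : Type} (F : (T -> Prop) -> Prop) (D : T -> Prop)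
  (f : T -> Rbar) (L : Rbar) : Prop :=
  forall Q, Rbar_nbhd L Q -> F (fun t => D t -> Q (f t)).

Definition Rbar_limval {T : Type} (F : (T -> Prop) -> Prop) (D : T -> Prop)
  (f : T -> Rbar) : Rbar :=
  epsilon (inhabits PInf) (fun L => filterlim F D f L).

Definition Rbar_liminf {T : Type} (F : (T -> Prop) -> Prop) (D : T -> Prop)
  (f : T -> Rbar) : Rbar :=
  Rbar_sup (fun v => exists P, F P /\
     v = Rbar_inf (fun w => exists t, P t /\ D t /\ w = f t)).

Definition C1_on (J : R -> Prop) (h : R -> R) : Prop :=
  exists h' : R -> R, forall y, J y ->
    (forall eps, 0 < eps -> exists del, 0 < del /\ forall t, J t -> t <> y ->
        Rabs (t - y) < del -> Rabs ((h t - h y) / (t - y) - h' y) < eps) /\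
    (forall eps, 0 < eps -> exists del, 0 < del /\ forall t, J t ->
        Rabs (t - y) < del -> Rabs (h' t - h' y) < eps).

(* Riemann integral \int_y^z f (oriented); arbitrary if f is not integrable *)
Definition Rint (f : R -> R) (y z : R) : R :=
  epsilon (inhabits 0) (fun r => exists pr : Riemann_integrable f y z, RiemannInt pr = r).

Definition inI (a b : Rbar) (x : R) : Prop := Rbar_lt a (Fin x) /\ Rbar_lt (Fin x) b.

Definition Int_to_b (b : Rbar) (f : R -> R) (y : R) : Rbar :=
  Rbar_limval (Rnbhd b) (fun z => y < z /\ Rbar_lt (Fin z) b) (fun z => Fin (Rint f y z)).

Definition Int_from_a (a : Rbar) (f : R -> R) (x : R) : Rbar :=
  Rbar_limval (Rnbhd a) (fun y => Rbar_lt a (Fin y) /\ y < x) (fun y => Fin (Rint f y x)).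

Section Diffusion.
Variables (a b : Rbar) (mu sigma : R -> R) (x0 : R).

Definition sdens (x : R) : R := exp (- Rint (fun u => 2 * mu u / (sigma u) ^ 2) x0 x).
Definition mdens (x : R) : R := / ((sigma x) ^ 2 * sdens x).
Definition Sfun (x : R) : R := Rint sdens x0 x.
Definition Mfun (x : R) : R := Rint mdens x0 x.

(* Feller's tests (reference point x0, all integrands nonnegative):
   Sigma(a) = \int_a^{x0} M[u,x0] dS(u),  N(a) = \int_a^{x0} S[u,x0] dM(u)  *)
Definition SigmaA : Rbar := Int_from_a a (fun u => (Mfun x0 - Mfun u) * sdens u) x0.
Definition NA : Rbar := Int_from_a a (fun u => (Sfun x0 - Sfun u) * mdens u) x0.
Definition SigmaB : Rbar := Int_to_b b (fun u => (Mfun u - Mfun x0) * sdens u) x0.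
Definition NB : Rbar := Int_to_b b (fun u => (Sfun u - Sfun x0) * mdens u) x0.

Definition regular_a : Prop := is_finite SigmaA /\ is_finite NA.
Definition exit_a : Prop := is_finite SigmaA /\ NA = PInf.
Definition entrance_a : Prop := SigmaA = PInf /\ is_finite NA.
Definition natural_a : Prop := SigmaA = PInf /\ NA = PInf.
Definition regular_b : Prop := is_finite SigmaB /\ is_finite NB.
Definition exit_b : Prop := is_finite SigmaB /\ NB = PInf.
Definition entrance_b : Prop := SigmaB = PInf /\ is_finite NB.
Definition natural_b : Prop := SigmaB = PInf /\ NB = PInf.

Definition attainable_a : Prop := regular_a \/ exit_a.

Definition inE (x : R) : Prop :=
  inI a b x \/ (Fin x = a /\ attainable_a) \/ (Fin x = b /\ entrance_b).

Definition extE (f : R -> R) (x : R) : Rbar :=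
  match excluded_middle_informative (inI a b x) with
  | left _ => Fin (f x)
  | right _ => Rbar_limval (Rnbhd (Fin x)) (inI a b) (fun y => Fin (f y))
  end.

Variable c0 : R -> R.
Variable c1 : R -> R -> Rbar.

(* g0(x) = \int_{x0}^x \int_u^b 2 c0(v) dM(v) dS(u) *)
Definition g0fun (x : R) : R :=
  Rint (fun u => Rbar_real (Int_to_b b (fun v => 2 * c0 v * mdens v) u) * sdens u) x0 x.
(* zeta(x) = \int_{x0}^x 2 M[u,b) dS(u) *)
Definition zetafun (x : R) : R :=
  Rint (fun u => 2 * Rbar_real (Int_to_b b mdens u) * sdens u) x0 x.

Definition g0E (x : R) : Rbar := extE g0fun x.
Definition zetaE (x : R) : Rbar := extE zetafun x.

Definition F0 (y z : R) : Rbar :=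
  if Rlt_dec y z then
    Rbar_div (Rbar_minus (Rbar_plus (c1 y z) (g0E z)) (g0E y))
             (Rbar_minus (zetaE z) (zetaE y))
  else PInf.

Definition F0star : Rbar :=
  Rbar_inf (fun v => exists y z, inE y /\ inE z /\ y <= z /\ v = F0 y z).

End Diffusion.

(* a_refl : the (regular) boundary a is specified to be reflecting *)
Definition Setting (a b : Rbar) (mu sigma : R -> R) (x0 : R) (a_refl : Prop) : Prop :=
  Rbar_lt a b /\ inI a b x0 /\
  (forall x, inI a b x -> continuity_pt mu x /\ continuity_pt sigma x /\ sigma x <> 0) /\
  (a_refl -> regular_a a mu sigma x0).

Definition ConditionA (a b : Rbar) (mu sigma : R -> R) (x0 : R) (a_refl : Prop) : Prop :=
  (forall x, inI a b x -> is_finite (Int_from_a a (sdens mu sigma x0) x)) /\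
  (forall x, inI a b x -> Int_to_b b (sdens mu sigma x0) x = PInf) /\
  (a_refl -> exists L : R,
      filterlim (Rnbhd a) (inI a b)
        (fun x => Rbar_scal_pos (sdens mu sigma x0 x) (Int_to_b b (mdens mu sigma x0) x))
        (Fin L)) /\
  (natural_b b mu sigma x0 -> forall y, inI a b y -> is_finite (Int_to_b b (mdens mu sigma x0) y)) /\
  (a = MInf -> natural_a a mu sigma x0) /\
  (b = PInf -> natural_b b mu sigma x0).

Definition ConditionB (a b : Rbar) (mu sigma : R -> R) (x0 : R) (a_refl : Prop)
  (c0 : R -> R) (c1 : R -> R -> Rbar) : Prop :=
  let E := inE a b mu sigma x0 in
  let m := mdens mu sigma x0 in
  (forall x, E x -> 0 <= c0 x) /\
  (forall x, E x -> filterlim (Rnbhd (Fin x)) E (fun y => Fin (c0 y)) (Fin (c0 x))) /\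
  (natural_a a mu sigma x0 -> exists L, filterlim (Rnbhd a) (inI a b) (fun y => Fin (c0 y)) L) /\
  (natural_b b mu sigma x0 -> exists L, filterlim (Rnbhd b) (inI a b) (fun y => Fin (c0 y)) L) /\
  (a = MInf -> filterlim (Rnbhd a) (inI a b) (fun y => Fin (c0 y)) PInf) /\
  (b = PInf -> filterlim (Rnbhd b) (inI a b) (fun y => Fin (c0 y)) PInf) /\
  (forall y, inI a b y -> is_finite (Int_to_b b (fun v => c0 v * m v) y)) /\
  (a_refl -> exists L : R,
      filterlim (Rnbhd a) (inI a b)
        (fun x => Rbar_scal_pos (sdens mu sigma x0 x) (Int_to_b b (fun v => c0 v * m v) x))
        (Fin L)) /\
  (forall y z, E y -> E z -> y <= z ->
      filterlim (Rnbhd2 y z) (fun p => E (fst p) /\ E (snd p) /\ fst p <= snd p)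
        (fun p => c1 (fst p) (snd p)) (c1 y z)) /\
  (exists k1, 0 < k1 /\ forall y z, E y -> E z -> y <= z -> Rbar_le (Fin k1) (c1 y z)) /\
  (forall z, E z -> Fin z <> a ->
      exists del h, 0 < del /\
        let J := fun y => E y /\ y <= z /\
                   match a with Fin al => y < al + del | MInf => y < - / del | PInf => False end in
        (forall y, J y -> c1 y z = Fin (h y)) /\ C1_on J h) /\
  (forall y, E y -> Fin y <> b ->
      exists del h, 0 < del /\
        let J := fun z => E z /\ y <= z /\
                   match b with Fin be => be - del < z | PInf => / del < z | MInf => False end in
        (forall z, J z -> c1 y z = Fin (h z)) /\ C1_on J h).

(* Main.v *)
From Coquelicot Require Import Coquelicot.
Require Import Defs.
From Stdlib Require Import Reals Lra Classical ClassicalEpsilon FunctionalExtensionality.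
Open Scope R_scope.

Lemma Rbar_le_refl x : Rbar_le x x.
Proof. destruct x; simpl; auto; lra. Qed.

Lemma Rbar_le_trans x y z : Rbar_le x y -> Rbar_le y z -> Rbar_le x z.
Proof. destruct x, y, z; simpl; intros; auto; try lra; contradiction. Qed.

Lemma Rbar_le_antisym x y : Rbar_le x y -> Rbar_le y x -> x = y.
Proof. destruct x, y; simpl; intros; try contradiction; auto. f_equal; lra. Qed.

Lemma Rbar_lt_le x y : Rbar_lt x y -> Rbar_le x y.
Proof. destruct x, y; simpl; intros; auto; lra. Qed.

Lemma Rbar_lt_not_le x y : Rbar_lt x y -> ~ Rbar_le y x.
Proof. destruct x, y; simpl; intros; auto; lra. Qed.

Lemma Rbar_not_lt_le' x y : ~ Rbar_lt y x -> Rbar_le x y.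
Proof. destruct x, y; simpl; intros; auto; lra. Qed.

Lemma Rbar_not_le_lt x y : ~ Rbar_le y x -> Rbar_lt x y.
Proof. destruct x, y; simpl; intros; auto; lra. Qed.

Lemma Rbar_le_lt_trans x y z : Rbar_le x y -> Rbar_lt y z -> Rbar_lt x z.
Proof. destruct x, y, z; simpl; intros; auto; try lra; contradiction. Qed.

Lemma Rbar_lt_le_trans x y z : Rbar_lt x y -> Rbar_le y z -> Rbar_lt x z.
Proof. destruct x, y, z; simpl; intros; auto; try lra; contradiction. Qed.

Lemma ex_lub_Rbar (E : Rbar -> Prop) : exists l, is_lub_Rbar E l.
Proof.
  destruct (classic (E PInf)) as [HP|HP].
  { exists PInf; split. intros x _; destruct x; simpl; auto.
    intros u Hu; apply Hu; auto. }
  set (ER := fun r => E (Fin r)).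
  destruct (classic (exists r, ER r)) as [[r0 Hr0]|Hne].
  - destruct (classic (bound ER)) as [Hb|Hb].
    + destruct (completeness ER Hb (ex_intro _ r0 Hr0)) as [m [Hm1 Hm2]].
      exists (Fin m); split.
      * intros x Hx; destruct x as [r| |]; simpl.
        -- exact (Hm1 r Hx).
        -- exact (HP Hx).
        -- exact I.
      * intros u Hu; destruct u as [r| |]; simpl.
        -- apply Hm2; intros x Hx; exact (Hu (Fin x) Hx).
        -- exact I.
        -- exact (Hu (Fin r0) Hr0).
    + exists PInf; split.
      * intros x _; destruct x; simpl; auto.
      * intros u Hu; destruct u as [r| |]; simpl; auto.
        -- apply Hb; exists r; intros x Hx; exact (Hu (Fin x) Hx).
        -- exact (Hu (Fin r0) Hr0).
  - exists MInf; split.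
    + intros x Hx; destruct x as [r| |]; simpl; auto.
      apply Hne; exists r; exact Hx.
    + intros; simpl; auto.
Qed.

Lemma Rbar_opp_opp x : Rbar_opp (Rbar_opp x) = x.
Proof. destruct x; simpl; auto. f_equal; ring. Qed.

Lemma Rbar_le_opp x y : Rbar_le (Rbar_opp x) (Rbar_opp y) <-> Rbar_le y x.
Proof. destruct x, y; simpl; split; auto; lra. Qed.

Lemma ex_glb_Rbar (E : Rbar -> Prop) : exists l, is_glb_Rbar E l.
Proof.
  destruct (ex_lub_Rbar (fun x => E (Rbar_opp x))) as [l [H1 H2]].
  exists (Rbar_opp l); split.
  - intros x Hx. apply Rbar_le_opp. rewrite Rbar_opp_opp. apply H1.
    rewrite Rbar_opp_opp; exact Hx.
  - intros u Hu. apply Rbar_le_opp. rewrite Rbar_opp_opp. apply H2.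
    intros x Hx. apply Rbar_le_opp. rewrite Rbar_opp_opp. apply Hu; exact Hx.
Qed.

Lemma Rbar_sup_spec E : is_lub_Rbar E (Rbar_sup E).
Proof. unfold Rbar_sup. apply epsilon_spec. apply ex_lub_Rbar. Qed.

Lemma Rbar_inf_spec E : is_glb_Rbar E (Rbar_inf E).
Proof. unfold Rbar_inf. apply epsilon_spec. apply ex_glb_Rbar. Qed.

Lemma Rbar_inf_eq E l : is_glb_Rbar E l -> Rbar_inf E = l.
Proof.
  intros [H1 H2]. destruct (Rbar_inf_spec E) as [H3 H4].
  apply Rbar_le_antisym; [apply H2; exact H3 | apply H4; exact H1].
Qed.

Definition Nb (L : Rbar) (e : R) : Rbar -> Prop :=
  match L with
  | Fin l => fun x => exists r, x = Fin r /\ Rabs (r - l) < e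
  | PInf => fun x => Rbar_lt (Fin (/ e)) x
  | MInf => fun x => Rbar_lt x (Fin (- / e))
  end.

Lemma Nb_nbhd L e : 0 < e -> Rbar_nbhd L (Nb L e).
Proof.
  intros He; destruct L; simpl.
  - exists e; split; auto. intros r0 Hr; exists r0; auto.
  - exists (/ e); auto.
  - exists (- / e); auto.
Qed.

Lemma Nb_sep L L' : L <> L' -> exists e, 0 < e /\ forall x, Nb L e x -> Nb L' e x -> False.
Proof.
  intros Hne.
  assert (Hgen : forall l, exists e, 0 < e /\ forall r, Rabs (r - l) < e -> r < / e /\ - / e < r).
  { intro l. exists (/ (Rabs l + 2)). split.
    - apply Rinv_0_lt_compat. pose proof (Rabs_pos l); lra.
    - intros r Hr. rewrite Rinv_inv.
      assert (Hp : / (Rabs l + 2) <= 1).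
      { rewrite <- Rinv_1. apply Rinv_le_contravar; [lra| pose proof (Rabs_pos l); lra]. }
      assert (Rabs (r - l) < 1) by lra.
      revert H; unfold Rabs; destruct (Rcase_abs (r - l)); destruct (Rcase_abs l); intros; lra. }
  destruct L as [l| |], L' as [l'| |].
  - assert (l <> l') by (intro; subst; auto).
    exists (Rabs (l - l') / 2); split.
    + assert (0 < Rabs (l - l')) by (apply Rabs_pos_lt; lra). lra.
    + simpl. intros x [r [-> H1]] [r' [Hr' H2]]. injection Hr' as <-.
      pose proof (Rabs_triang (r - l') (l - r)) as Ht.
      replace (r - l' + (l - r)) with (l - l') in Ht by ring.
      rewrite <- Rabs_Ropp in H1. replace (- (r - l)) with (l - r) in H1 by ring. lra.
  - destruct (Hgen l) as [e [He H]]. exists e; split; auto.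
    simpl; intros x [r [-> H1]] H2. simpl in H2. apply H in H1. lra.
  - destruct (Hgen l) as [e [He H]]. exists e; split; auto.
    simpl; intros x [r [-> H1]] H2. simpl in H2. apply H in H1. lra.
  - destruct (Hgen l') as [e [He H]]. exists e; split; auto.
    simpl; intros x H2 [r [-> H1]]. simpl in H2. apply H in H1. lra.
  - contradiction.
  - exists 1; split; [lra|]. simpl; intros x H1 H2. destruct x; simpl in *; auto.
    rewrite Rinv_1 in *; lra.
  - destruct (Hgen l') as [e [He H]]. exists e; split; auto.
    simpl; intros x H2 [r [-> H1]]. simpl in H2. apply H in H1. lra.
  - exists 1; split; [lra|]. simpl; intros x H1 H2. destruct x; simpl in *; auto.
    rewrite Rinv_1 in *; lra.
  - contradiction.
Qed.

Definition Fgood {T : Type} (F : (T -> Prop) -> Prop) (D : T -> Prop) : Prop :=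
  (forall P Q, F P -> F Q -> F (fun t => P t /\ Q t)) /\
  (forall P, F P -> exists t, D t /\ P t) /\
  (forall P Q : T -> Prop, (forall t, P t -> Q t) -> F P -> F Q).

Lemma limval_eq {T : Type} (F : (T -> Prop) -> Prop) (D : T -> Prop) (f : T -> Rbar) L :
  Fgood F D -> filterlim F D f L -> Rbar_limval F D f = L.
Proof.
  intros [Fand [Fpr Fmon]] HL. unfold Rbar_limval.
  set (L' := epsilon _ _).
  assert (HL' : filterlim F D f L') by (apply epsilon_spec; exists L; exact HL).
  destruct (classic (L' = L)) as [E|Hne]; auto. exfalso.
  destruct (Nb_sep _ _ Hne) as [e [He Hsep]].
  pose proof (HL' _ (Nb_nbhd L' e He)) as H1.
  pose proof (HL _ (Nb_nbhd L e He)) as H2.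
  destruct (Fpr _ (Fand _ _ H1 H2)) as [t [Dt [H3 H4]]].
  exact (Hsep _ (H3 Dt) (H4 Dt)).
Qed.

Lemma filterlim_fin {T : Type} (F : (T -> Prop) -> Prop) (D : T -> Prop) (f : T -> R) l :
  (forall P Q : T -> Prop, (forall t, P t -> Q t) -> F P -> F Q) ->
  (forall e, 0 < e -> F (fun t => D t -> Rabs (f t - l) < e)) ->
  filterlim F D (fun t => Fin (f t)) (Fin l).
Proof.
  intros Fmon H Q [e [He HQ]]. apply (Fmon _ _ (fun t Ht Dt => HQ _ (Ht Dt)) (H e He)).
Qed.

Lemma filterlim_fin_inv {T : Type} (F : (T -> Prop) -> Prop) (D : T -> Prop) (f : T -> R) l :
  (forall P Q : T -> Prop, (forall t, P t -> Q t) -> F P -> F Q) ->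
  filterlim F D (fun t => Fin (f t)) (Fin l) ->
  (forall e, 0 < e -> F (fun t => D t -> Rabs (f t - l) < e)).
Proof.
  intros Fmon H e He. refine (Fmon _ _ _ (H _ (Nb_nbhd (Fin l) e He))).
  intros t Ht Dt. destruct (Ht Dt) as [r [Hr H']]. injection Hr as ->. exact H'.
Qed.

Lemma filterlim_pinf {T : Type} (F : (T -> Prop) -> Prop) (D : T -> Prop) (f : T -> R) :
  (forall P Q : T -> Prop, (forall t, P t -> Q t) -> F P -> F Q) ->
  (forall M, F (fun t => D t -> M < f t)) ->
  filterlim F D (fun t => Fin (f t)) PInf.
Proof.
  intros Fmon H Q [M HQ]. refine (Fmon _ _ _ (H M)). intros t Ht Dt. apply HQ. simpl. auto.
Qed.

Lemma Rnbhd_and p P Q : Rnbhd p P -> Rnbhd p Q -> Rnbhd p (fun t => P t /\ Q t).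
Proof.
  destruct p; simpl.
  - intros [e1 [He1 H1]] [e2 [He2 H2]]. exists (Rmin e1 e2); split.
    + apply Rmin_pos; auto.
    + intros x Hx; split; [apply H1|apply H2]; pose proof (Rmin_l e1 e2); pose proof (Rmin_r e1 e2); lra.
  - intros [M1 H1] [M2 H2]. exists (Rmax M1 M2). intros x Hx; split; [apply H1|apply H2];
      pose proof (Rmax_l M1 M2); pose proof (Rmax_r M1 M2); lra.
  - intros [M1 H1] [M2 H2]. exists (Rmin M1 M2). intros x Hx; split; [apply H1|apply H2];
      pose proof (Rmin_l M1 M2); pose proof (Rmin_r M1 M2); lra.
Qed.

Lemma Rnbhd_mono p (P Q : R -> Prop) : (forall t, P t -> Q t) -> Rnbhd p P -> Rnbhd p Q.
Proof.
  destruct p; simpl.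
  - intros H [e [He H1]]; exists e; split; auto.
  - intros H [M H1]; exists M; auto.
  - intros H [M H1]; exists M; auto.
Qed.

Lemma Fgood_b (b : Rbar) (c : R) (D : R -> Prop) :
  Rbar_lt (Fin c) b -> (forall z, c < z -> Rbar_lt (Fin z) b -> D z) -> Fgood (Rnbhd b) D.
Proof.
  intros Hcb HD. split; [apply Rnbhd_and|split; [|apply Rnbhd_mono]].
  intros P HP. destruct b as [be| |]; simpl in *.
  - destruct HP as [e [He HP]].
    set (t := be - Rmin e (be - c) / 2).
    assert (Hm1 : 0 < Rmin e (be - c)) by (apply Rmin_pos; lra).
    pose proof (Rmin_l e (be - c)); pose proof (Rmin_r e (be - c)).
    exists t; split; [apply HD; unfold t; simpl; lra|].
    apply HP. unfold t. rewrite Rabs_left; lra.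
  - destruct HP as [M HP]. exists (Rmax c M + 1).
    pose proof (Rmax_l c M); pose proof (Rmax_r c M).
    split; [apply HD; simpl; auto; lra| apply HP; lra].
  - contradiction.
Qed.

Lemma Fgood_a (a : Rbar) (c : R) (D : R -> Prop) :
  Rbar_lt a (Fin c) -> (forall z, Rbar_lt a (Fin z) -> z < c -> D z) -> Fgood (Rnbhd a) D.
Proof.
  intros Hca HD. split; [apply Rnbhd_and|split; [|apply Rnbhd_mono]].
  intros P HP. destruct a as [al| |]; simpl in *.
  - destruct HP as [e [He HP]].
    set (t := al + Rmin e (c - al) / 2).
    assert (Hm1 : 0 < Rmin e (c - al)) by (apply Rmin_pos; lra).
    pose proof (Rmin_l e (c - al)); pose proof (Rmin_r e (c - al)).
    exists t; split; [apply HD; unfold t; simpl; lra|].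
    apply HP. unfold t. rewrite Rabs_right; lra.
  - contradiction.
  - destruct HP as [M HP]. exists (Rmin c M - 1).
    pose proof (Rmin_l c M); pose proof (Rmin_r c M).
    split; [apply HD; simpl; auto; lra| apply HP; lra].
Qed.

Lemma mono_lim_b (b : Rbar) (c : R) (D : R -> Prop) (g : R -> R) K :
  Rbar_lt (Fin c) b -> (forall z, c < z -> Rbar_lt (Fin z) b -> D z) ->
  (forall z, D z -> Rbar_lt (Fin z) b) ->
  (forall z z', c < z -> z <= z' -> D z -> D z' -> g z <= g z') ->
  (forall z, c < z -> D z -> g z <= K) ->
  exists L, filterlim (Rnbhd b) D (fun z => Fin (g z)) (Fin L) /\
    (forall z, c < z -> D z -> g z <= L) /\
    (forall e, 0 < e -> exists z, c < z /\ D z /\ L - e < g z).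
Proof.
  intros Hcb HD1 HD2 Hmon HK.
  set (E := fun r => exists z, c < z /\ D z /\ r = g z).
  assert (HE : exists r, E r).
  { destruct (Fgood_b b c D Hcb HD1) as [_ [Hp _]].
    destruct (Hp (fun z => c < z)) as [z [Dz Hz]].
    - destruct b as [be| |]; simpl in *.
      + exists (be - c); split; [lra|]. intros x Hx. rewrite Rabs_minus_sym in Hx.
        unfold Rabs in Hx; destruct (Rcase_abs (be - x)); lra.
      + exists c; auto.
      + contradiction.
    - exists (g z), z; auto. }
  assert (Hbd : bound E) by (exists K; intros r [z [Hz [Dz ->]]]; auto).
  destruct (completeness E Hbd HE) as [L [HL1 HL2]].
  assert (Hup : forall z, c < z -> D z -> g z <= L) by (intros z Hz Dz; apply HL1; exists z; auto).
  assert (Happ : forall e, 0 < e -> exists z, c < z /\ D z /\ L - e < g z).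
  { intros e He. apply NNPP; intro Hn. assert (L <= L - e); [|lra].
    apply HL2. intros r [z [Hz [Dz ->]]]. apply Rnot_lt_le; intro H'. apply Hn; exists z; auto. }
  exists L; split; [|split; auto].
  apply filterlim_fin; [apply Rnbhd_mono|]. intros e He.
  destruct (Happ e He) as [z1 [Hz1 [Dz1 Hg1]]].
  pose proof (HD2 _ Dz1) as Hz1b.
  apply (Rnbhd_mono b (fun t => z1 < t)).
  - intros t Ht Dt. assert (g z1 <= g t) by (apply Hmon; auto; lra).
    assert (g t <= L) by (apply Hup; auto; lra).
    rewrite Rabs_left1; lra.
  - destruct b as [be| |]; simpl in *.
    + exists (be - z1); split; [lra|]. intros x Hx. rewrite Rabs_minus_sym in Hx.
      unfold Rabs in Hx; destruct (Rcase_abs (be - x)); lra.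
    + exists z1; auto.
    + contradiction.
Qed.

Lemma mono_lim_b_inf (b : Rbar) (c : R) (D : R -> Prop) (g : R -> R) :
  (forall z, D z -> Rbar_lt (Fin z) b) ->
  (forall z z', c < z -> z <= z' -> D z -> D z' -> g z <= g z') ->
  (forall K, exists z, c < z /\ D z /\ K < g z) ->
  filterlim (Rnbhd b) D (fun z => Fin (g z)) PInf.
Proof.
  intros HD2 Hmon HK. apply filterlim_pinf; [apply Rnbhd_mono|]. intros M.
  destruct (HK M) as [z1 [Hz1 [Dz1 Hg1]]].
  pose proof (HD2 _ Dz1) as Hz1b.
  apply (Rnbhd_mono b (fun t => z1 < t)).
  - intros t Ht Dt. assert (g z1 <= g t) by (apply Hmon; auto; lra). lra.
  - destruct b as [be| |]; simpl in *.
    + exists (be - z1); split; [lra|]. intros x Hx. rewrite Rabs_minus_sym in Hx.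
      unfold Rabs in Hx; destruct (Rcase_abs (be - x)); lra.
    + exists z1; auto.
    + contradiction.
Qed.

Lemma mono_lim_a (a : Rbar) (c : R) (D : R -> Prop) (g : R -> R) K :
  Rbar_lt a (Fin c) -> (forall z, Rbar_lt a (Fin z) -> z < c -> D z) ->
  (forall z, D z -> Rbar_lt a (Fin z)) ->
  (forall z z', z <= z' -> z' < c -> D z -> D z' -> g z' <= g z) ->
  (forall z, z < c -> D z -> g z <= K) ->
  exists L, filterlim (Rnbhd a) D (fun z => Fin (g z)) (Fin L) /\
    (forall z, z < c -> D z -> g z <= L) /\
    (forall e, 0 < e -> exists z, z < c /\ D z /\ L - e < g z).
Proof.
  intros Hca HD1 HD2 Hmon HK.
  set (E := fun r => exists z, z < c /\ D z /\ r = g z).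
  assert (HE : exists r, E r).
  { destruct (Fgood_a a c D Hca HD1) as [_ [Hp _]].
    destruct (Hp (fun z => z < c)) as [z [Dz Hz]].
    - destruct a as [al| |]; simpl in *.
      + exists (c - al); split; [lra|]. intros x Hx.
        unfold Rabs in Hx; destruct (Rcase_abs (x - al)); lra.
      + contradiction.
      + exists c; auto.
    - exists (g z), z; auto. }
  assert (Hbd : bound E) by (exists K; intros r [z [Hz [Dz ->]]]; auto).
  destruct (completeness E Hbd HE) as [L [HL1 HL2]].
  assert (Hup : forall z, z < c -> D z -> g z <= L) by (intros z Hz Dz; apply HL1; exists z; auto).
  assert (Happ : forall e, 0 < e -> exists z, z < c /\ D z /\ L - e < g z).
  { intros e He. apply NNPP; intro Hn. assert (L <= L - e); [|lra].
    apply HL2. intros r [z [Hz [Dz ->]]]. apply Rnot_lt_le; intro H'. apply Hn; exists z; auto. }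
  exists L; split; [|split; auto].
  apply filterlim_fin; [apply Rnbhd_mono|]. intros e He.
  destruct (Happ e He) as [z1 [Hz1 [Dz1 Hg1]]].
  pose proof (HD2 _ Dz1) as Hz1a.
  apply (Rnbhd_mono a (fun t => t < z1)).
  - intros t Ht Dt. assert (g z1 <= g t) by (apply Hmon; auto; lra).
    assert (g t <= L) by (apply Hup; auto; lra).
    rewrite Rabs_left1; lra.
  - destruct a as [al| |]; simpl in *.
    + exists (z1 - al); split; [lra|]. intros x Hx.
      unfold Rabs in Hx; destruct (Rcase_abs (x - al)); lra.
    + contradiction.
    + exists z1; auto.
Qed.

Lemma mono_lim_a_inf (a : Rbar) (c : R) (D : R -> Prop) (g : R -> R) :
  (forall z, D z -> Rbar_lt a (Fin z)) ->
  (forall z z', z <= z' -> z' < c -> D z -> D z' -> g z' <= g z) ->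
  (forall K, exists z, z < c /\ D z /\ K < g z) ->
  filterlim (Rnbhd a) D (fun z => Fin (g z)) PInf.
Proof.
  intros HD2 Hmon HK. apply filterlim_pinf; [apply Rnbhd_mono|]. intros M.
  destruct (HK M) as [z1 [Hz1 [Dz1 Hg1]]].
  pose proof (HD2 _ Dz1) as Hz1a.
  apply (Rnbhd_mono a (fun t => t < z1)).
  - intros t Ht Dt. assert (g z1 <= g t) by (apply Hmon; auto; lra). lra.
  - destruct a as [al| |]; simpl in *.
    + exists (z1 - al); split; [lra|]. intros x Hx.
      unfold Rabs in Hx; destruct (Rcase_abs (x - al)); lra.
    + contradiction.
    + exists z1; auto.
Qed.

Lemma filterlim_opp_fin {T : Type} (F : (T -> Prop) -> Prop) (D : T -> Prop) (g : T -> R) l :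
  (forall P Q : T -> Prop, (forall t, P t -> Q t) -> F P -> F Q) ->
  filterlim F D (fun t => Fin (- g t)) (Fin l) -> filterlim F D (fun t => Fin (g t)) (Fin (- l)).
Proof.
  intros Fmon H. apply filterlim_fin; auto. intros e He.
  refine (Fmon _ _ _ (filterlim_fin_inv F D (fun t => - g t) l Fmon H e He)).
  intros t Ht Dt. specialize (Ht Dt). rewrite <- Rabs_Ropp. replace (- (g t - - l)) with (- g t - l) by ring. auto.
Qed.

Lemma liminf_lower {T : Type} (F : (T -> Prop) -> Prop) (D : T -> Prop) (f : T -> Rbar) :
  Rbar_liminf F D f = Fin 0 -> forall eta, 0 < eta ->
  exists P, F P /\ forall t, P t -> D t -> Rbar_lt (Fin (- eta)) (f t).
Proof.
  intros H eta Heta. unfold Rbar_liminf in H.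
  set (S := fun v => exists P, F P /\ v = Rbar_inf (fun w => exists t, P t /\ D t /\ w = f t)) in *.
  destruct (Rbar_sup_spec S) as [H1 H2]. rewrite H in H1, H2.
  destruct (classic (exists v, S v /\ Rbar_lt (Fin (- eta)) v)) as [[v [[P [HP ->]] Hv]]|Hn].
  - exists P; split; auto. intros t Pt Dt.
    destruct (Rbar_inf_spec (fun w => exists t, P t /\ D t /\ w = f t)) as [H3 _].
    apply (Rbar_lt_le_trans _ _ _ Hv). apply H3. exists t; auto.
  - exfalso. assert (Rbar_le (Fin 0) (Fin (- eta))); [|simpl in *; lra].
    apply H2. intros x Hx. apply Rbar_not_lt_le'; intro. apply Hn; exists x; auto.
Qed.

Lemma liminf_upper {T : Type} (F : (T -> Prop) -> Prop) (D : T -> Prop) (f : T -> Rbar) :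
  Rbar_liminf F D f = Fin 0 -> forall eta, 0 < eta -> forall P, F P ->
  exists t, P t /\ D t /\ Rbar_lt (f t) (Fin eta).
Proof.
  intros H eta Heta P HP. unfold Rbar_liminf in H.
  set (S := fun v => exists P, F P /\ v = Rbar_inf (fun w => exists t, P t /\ D t /\ w = f t)) in *.
  destruct (Rbar_sup_spec S) as [H1 _]. rewrite H in H1.
  set (W := fun w => exists t, P t /\ D t /\ w = f t).
  assert (Hv : Rbar_le (Rbar_inf W) (Fin 0)) by (apply H1; exists P; auto).
  apply NNPP; intro Hn.
  destruct (Rbar_inf_spec W) as [_ H4].
  assert (Rbar_le (Fin eta) (Rbar_inf W)).
  { apply H4. intros x [t [Pt [Dt ->]]]. apply Rbar_not_lt_le'. intro Hlt. apply Hn. exists t; auto. }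
  pose proof (Rbar_le_trans _ _ _ H0 Hv). simpl in H2. lra.
Qed.

Lemma arith_a c Gy Zy Gz Zz k1 eps eta :
  0 < eps -> 0 < k1 -> k1 <= c -> Gy <= 0 -> Zy < 0 -> Zy < Zz -> eta <= eps / 2 -> 0 < eta ->
  eta * (Rabs (2 * (Gz - eps * Zz) / eps) + 1) <= k1 -> - eta < (c + - Gy) / Zy ->
  (c + Gz + - Gy) / (Zz + - Zy) < eps.
Proof.
  intros He Hk Hc HGy HZy HZ Hee Heta HK Hr.
  set (K := 2 * (Gz - eps * Zz) / eps) in *.
  set (A := - Zy).
  assert (HA : 0 < A) by (unfold A; lra).
  assert (H1 : c - Gy < eta * A).
  { unfold A. apply (Rmult_lt_compat_r (- Zy)) in Hr; [|lra].
    unfold Rdiv in Hr. replace ((c + - Gy) * / Zy * - Zy) with (- (c - Gy)) in Hr by (field; lra). lra. }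
  assert (H2 : Rabs K + 1 < A).
  { assert (eta * (Rabs K + 1) < eta * A) by lra. apply Rmult_lt_reg_l in H; auto. }
  pose proof (Rle_abs K).
  assert (H3 : Gz - eps * Zz < eps / 2 * A).
  { assert (HK' : K < A) by lra. unfold K in HK'.
    apply (Rmult_lt_compat_l (eps / 2)) in HK'; [|lra].
    replace (eps / 2 * (2 * (Gz - eps * Zz) / eps)) with (Gz - eps * Zz) in HK' by (field; lra). exact HK'. }
  assert (H4 : eta * A <= eps / 2 * A) by (apply Rmult_le_compat_r; lra).
  apply (Rmult_lt_reg_r (Zz + - Zy)); [lra|].
  unfold Rdiv. rewrite Rmult_assoc, Rinv_l, Rmult_1_r by lra. unfold A in *. lra.
Qed.

Lemma arith_b c Gy Zy Gt Zt k1 eps eta :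
  0 < eps -> 0 < k1 -> k1 <= c -> 0 <= Gt -> 0 < Zt -> Zy < Zt -> eta <= eps / 2 -> 0 < eta ->
  eta * (Rabs (2 * (eps * Zy - Gy) / eps) + 1) <= k1 -> (c + Gt) / Zt < eta ->
  (c + Gt + - Gy) / (Zt + - Zy) < eps.
Proof.
  intros He Hk Hc HGt HZt HZ Hee Heta HK Hr.
  set (K := 2 * (eps * Zy - Gy) / eps) in *.
  assert (H1 : c + Gt < eta * Zt).
  { apply (Rmult_lt_compat_r Zt) in Hr; [|lra].
    unfold Rdiv in Hr. replace ((c + Gt) * / Zt * Zt) with (c + Gt) in Hr by (field; lra). lra. }
  assert (H2 : Rabs K + 1 < Zt).
  { assert (eta * (Rabs K + 1) < eta * Zt) by lra. apply Rmult_lt_reg_l in H; auto. }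
  pose proof (Rle_abs K).
  assert (H3 : eps * Zy - Gy < eps / 2 * Zt).
  { assert (HK' : K < Zt) by lra. unfold K in HK'.
    apply (Rmult_lt_compat_l (eps / 2)) in HK'; [|lra].
    replace (eps / 2 * (2 * (eps * Zy - Gy) / eps)) with (eps * Zy - Gy) in HK' by (field; lra). exact HK'. }
  assert (H4 : eta * Zt <= eps / 2 * Zt) by (apply Rmult_le_compat_r; lra).
  apply (Rmult_lt_reg_r (Zt + - Zy)); [lra|].
  unfold Rdiv. rewrite Rmult_assoc, Rinv_l, Rmult_1_r by lra. lra.
Qed.

Lemma arith_c c Gd D eta ep : 0 < D -> c / D < eta -> Gd <= ep * D -> (c + Gd) / D < eta + ep.
Proof.
  intros HD Hr HG. apply (Rmult_lt_compat_r D) in Hr; auto.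
  unfold Rdiv in *. replace (c * / D * D) with c in Hr by (field; lra).
  apply (Rmult_lt_reg_r D); auto. rewrite Rmult_assoc, Rinv_l, Rmult_1_r by lra. lra.
Qed.

Section Integ.
Variables (a b : Rbar).
Let I := inI a b.

Lemma I_between x y t : I x -> I y -> x <= t <= y -> I t.
Proof.
  unfold I, inI. intros [H1 H2] [H3 H4] [H5 H6]. split.
  - destruct a; simpl in *; auto; lra.
  - destruct b; simpl in *; auto; lra.
Qed.

Lemma I_open x : I x -> exists d, 0 < d /\ forall t, Rabs (t - x) < d -> I t.
Proof.
  unfold I, inI. intros [H1 H2].
  assert (Ha : exists d, 0 < d /\ forall t, Rabs (t - x) < d -> Rbar_lt a (Fin t)).
  { destruct a as [al| |]; simpl in *.
    - exists (x - al); split; [lra|]. intros t Ht. unfold Rabs in Ht; destruct (Rcase_abs (t - x)); lra.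
    - contradiction.
    - exists 1; split; auto; lra. }
  assert (Hb : exists d, 0 < d /\ forall t, Rabs (t - x) < d -> Rbar_lt (Fin t) b).
  { destruct b as [be| |]; simpl in *.
    - exists (be - x); split; [lra|]. intros t Ht. unfold Rabs in Ht; destruct (Rcase_abs (t - x)); lra.
    - exists 1; split; auto; lra.
    - contradiction. }
  destruct Ha as [d1 [Hd1 Ha]], Hb as [d2 [Hd2 Hb]].
  exists (Rmin d1 d2); split; [apply Rmin_pos; auto|].
  pose proof (Rmin_l d1 d2); pose proof (Rmin_r d1 d2).
  intros t Ht; split; [apply Ha|apply Hb]; lra.
Qed.

Lemma I_locally x : I x -> locally x I.
Proof.
  intros Hx. destruct (I_open x Hx) as [d [Hd H]].
  exists (mkposreal d Hd). intros y Hy. apply H. exact Hy.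
Qed.

Definition contI (f : R -> R) := forall x, I x -> continuity_pt f x.

Lemma contI_ext f g : (forall t, I t -> f t = g t) -> contI g -> contI f.
Proof.
  intros He Hg x Hx. apply (continuity_pt_ext_loc g f x); [|apply Hg; auto].
  destruct (I_locally x Hx) as [eps Heps]. exists eps. intros y Hy. symmetry. apply He, Heps, Hy.
Qed.

Lemma exI f x y : contI f -> I x -> I y -> ex_RInt f x y.
Proof.
  intros Hf Hx Hy. apply (@ex_RInt_continuous R_CompleteNormedModule). intros z Hz.
  apply continuity_pt_filterlim. apply Hf.
  destruct (Rle_dec x y).
  - rewrite Rmin_left, Rmax_right in Hz by lra. apply (I_between x y); auto.
  - rewrite Rmin_right, Rmax_left in Hz by lra. apply (I_between y x); auto.
Qed.

Lemma RintE f x y : contI f -> I x -> I y -> Rint f x y = RInt f x y.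
Proof.
  intros Hf Hx Hy. pose proof (exI f x y Hf Hx Hy) as He.
  unfold Rint. set (r := epsilon _ _).
  assert (Hr : exists pr : Riemann_integrable f x y, RiemannInt pr = r).
  { apply (epsilon_spec (inhabits 0) (fun r => exists pr : Riemann_integrable f x y, RiemannInt pr = r)).
    exists (RiemannInt (ex_RInt_Reals_0 f x y He)). exists (ex_RInt_Reals_0 f x y He). reflexivity. }
  destruct Hr as [pr <-]. symmetry. apply RInt_Reals.
Qed.

Lemma Rint_chasles f x y z : contI f -> I x -> I y -> I z -> Rint f x y + Rint f y z = Rint f x z.
Proof.
  intros Hf Hx Hy Hz. rewrite !RintE; auto. apply (@RInt_Chasles R_CompleteNormedModule f x y z); apply exI; auto.
Qed.

Lemma Rint_refl f x : contI f -> I x -> Rint f x x = 0.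
Proof. intros Hf Hx. rewrite RintE; auto. apply (@RInt_point R_CompleteNormedModule). Qed.

Lemma Rint_swap f x y : contI f -> I x -> I y -> Rint f x y = - Rint f y x.
Proof.
  intros Hf Hx Hy. pose proof (Rint_chasles f x y x Hf Hx Hy Hx). rewrite Rint_refl in H; auto. lra.
Qed.

Lemma Rint_deriv f c x : contI f -> I c -> I x -> is_derive (fun t => Rint f c t) x (f x).
Proof.
  intros Hf Hc Hx.
  apply (is_derive_ext_loc (fun t => RInt f c t)).
  - destruct (I_locally x Hx) as [eps Heps]. exists eps. intros y Hy. symmetry; apply RintE; auto.
  - apply (is_derive_RInt f (fun t => RInt f c t) c x).
    + destruct (I_locally x Hx) as [eps Heps]. exists eps. intros y Hy. apply (@RInt_correct R_CompleteNormedModule), exI; auto.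
    + apply continuity_pt_filterlim, Hf, Hx.
Qed.

Lemma Rint_deriv_l f c x : contI f -> I c -> I x -> is_derive (fun t => Rint f t c) x (- f x).
Proof.
  intros Hf Hc Hx.
  apply (is_derive_ext_loc (fun t => - Rint f c t)).
  - destruct (I_locally x Hx) as [eps Heps]. exists eps. intros y Hy. symmetry; apply Rint_swap; auto.
  - apply (is_derive_opp (fun t => Rint f c t) x (f x)). apply Rint_deriv; auto.
Qed.

Lemma deriv_cont g x l : is_derive g x l -> continuity_pt g x.
Proof.
  intros H. apply continuity_pt_filterlim. apply (@ex_derive_continuous R_AbsRing R_NormedModule). exists l; exact H.
Qed.

Lemma Rint_cont f c x : contI f -> I c -> I x -> continuity_pt (fun t => Rint f c t) x.
Proof. intros; eapply deriv_cont, Rint_deriv; eauto. Qed.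

Lemma Rint_cont_l f c x : contI f -> I c -> I x -> continuity_pt (fun t => Rint f t c) x.
Proof. intros; eapply deriv_cont, Rint_deriv_l; eauto. Qed.

Lemma Rint_le f g x y : contI f -> contI g -> I x -> I y -> x <= y ->
  (forall t, x < t < y -> f t <= g t) -> Rint f x y <= Rint g x y.
Proof.
  intros Hf Hg Hx Hy Hxy H. rewrite !RintE; auto. apply RInt_le; auto; apply exI; auto.
Qed.

Lemma Rint_ge0 f x y : contI f -> I x -> I y -> x <= y ->
  (forall t, x < t < y -> 0 <= f t) -> 0 <= Rint f x y.
Proof.
  intros Hf Hx Hy Hxy H. rewrite RintE; auto. apply RInt_ge_0; auto; apply exI; auto.
Qed.

Lemma Rint_gt0 f x y : contI f -> I x -> I y -> x < y ->
  (forall t, x < t < y -> 0 < f t) -> 0 < Rint f x y.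
Proof.
  intros Hf Hx Hy Hxy H. rewrite RintE; auto. apply RInt_gt_0; auto.
  intros t Ht. apply continuity_pt_filterlim, Hf. apply (I_between x y); auto.
Qed.

Lemma RInt_scalR f x y (al : R) : ex_RInt f x y -> RInt (fun t => al * f t) x y = al * RInt f x y.
Proof. intros H. exact (@RInt_scal R_CompleteNormedModule f x y al H). Qed.

Lemma ex_RInt_scalR f x y (al : R) : ex_RInt f x y -> ex_RInt (fun t => al * f t) x y.
Proof. intros H. exact (@ex_RInt_scal R_CompleteNormedModule f x y al H). Qed.

Lemma RInt_plusR f g x y : ex_RInt f x y -> ex_RInt g x y ->
  RInt (fun t => f t + g t) x y = RInt f x y + RInt g x y.
Proof. intros H1 H2. exact (@RInt_plus R_CompleteNormedModule f g x y H1 H2). Qed.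

Lemma Rint_lin f g (al be : R) x y : contI f -> contI g -> I x -> I y ->
  Rint (fun t => al * f t + be * g t) x y = al * Rint f x y + be * Rint g x y.
Proof.
  intros Hf Hg Hx Hy.
  assert (Hc : contI (fun t => al * f t + be * g t)).
  { intros z Hz. apply continuity_pt_plus; apply continuity_pt_mult.
    - apply continuity_pt_const; intros ? ?; reflexivity.
    - apply Hf; auto.
    - apply continuity_pt_const; intros ? ?; reflexivity.
    - apply Hg; auto. }
  rewrite !RintE; auto.
  rewrite (RInt_plusR (fun t => al * f t) (fun t => be * g t)).
  - rewrite (RInt_scalR f x y al), (RInt_scalR g x y be); try apply exI; auto.
  - apply (ex_RInt_scalR f x y al); apply exI; auto.
  - apply (ex_RInt_scalR g x y be); apply exI; auto.
Qed.

Lemma Rint_scal f (al : R) x y : contI f -> I x -> I y ->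
  Rint (fun t => al * f t) x y = al * Rint f x y.
Proof.
  intros Hf Hx Hy. rewrite !RintE; auto.
  - apply (RInt_scalR f x y al); apply exI; auto.
  - intros z Hz. apply continuity_pt_mult; [apply continuity_pt_const; intros ? ?; reflexivity| auto].
Qed.

End Integ.

Section Tails.
Variables (a b : Rbar).
Let I := inI a b.

Lemma I_above w : I w -> exists z, w < z /\ I z.
Proof.
  intros Hw. destruct (I_open a b w Hw) as [d [Hd H]].
  exists (w + d / 2); split; [lra|]. apply H. rewrite Rabs_right; lra.
Qed.

Lemma I_below w : I w -> exists z, z < w /\ I z.
Proof.
  intros Hw. destruct (I_open a b w Hw) as [d [Hd H]].
  exists (w - d / 2); split; [lra|]. apply H. rewrite Rabs_left; lra.
Qed.

Definition supP (P : R -> Prop) (g : R -> R) (L : R) :=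
  (forall z, P z -> g z <= L) /\ (forall e, 0 < e -> exists z, P z /\ L - e < g z).

Lemma supP_unique P g L L' : supP P g L -> supP P g L' -> L = L'.
Proof.
  intros [H1 H2] [H3 H4].
  destruct (Rtotal_order L L') as [Hl|[Hl|Hl]]; auto.
  - destruct (H4 (L' - L)) as [z [Pz Hz]]; [lra|]. specialize (H1 z Pz). lra.
  - destruct (H2 (L - L')) as [z [Pz Hz]]; [lra|]. specialize (H3 z Pz). lra.
Qed.

Lemma Itb_mono f u z z' : contI a b f -> I u -> (forall t, u < t -> I t -> 0 <= f t) ->
  u <= z -> z <= z' -> I z -> I z' -> Rint f u z <= Rint f u z'.
Proof.
  intros Hf Hu Hpos H1 H2 Hz Hz'. rewrite <- (Rint_chasles a b f u z z'); auto.
  assert (0 <= Rint f z z'); [|lra].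
  apply (Rint_ge0 a b); auto. intros t Ht. apply Hpos; [lra|]. apply (I_between a b z z'); auto; lra.
Qed.

Lemma Itb_fin f u K : contI a b f -> I u -> (forall t, u < t -> I t -> 0 <= f t) ->
  (forall z, u < z -> I z -> Rint f u z <= K) ->
  exists L, Int_to_b b f u = Fin L /\ supP (fun z => u < z /\ I z) (Rint f u) L.
Proof.
  intros Hf Hu Hpos HK.
  set (D := fun z => u < z /\ Rbar_lt (Fin z) b).
  assert (HDI : forall z, D z -> I z).
  { intros z [H1 H2]. split; auto. destruct Hu as [Hu _]. destruct a; simpl in *; auto; lra. }
  assert (Hub : Rbar_lt (Fin u) b) by (destruct Hu; auto).
  destruct (mono_lim_b b u D (Rint f u) K Hub) as [L [HL1 [HL2 HL3]]].
  - intros z H1 H2; split; auto.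
  - intros z [_ H]; auto.
  - intros z z' H1 H2 Dz Dz'. apply Itb_mono; auto; lra.
  - intros z H Dz. apply HK; auto.
  - exists L; split.
    + unfold Int_to_b. apply limval_eq; auto. apply (Fgood_b b u); [exact Hub| intros z H1 H2; split; auto].
    + split.
      * intros z [H1 H2]. apply HL2; auto. split; auto. destruct H2; auto.
      * intros e He. destruct (HL3 e He) as [z [H1 [H2 H3]]]. exists z; auto.
Qed.

Lemma Itb_inf f u : contI a b f -> I u -> (forall t, u < t -> I t -> 0 <= f t) ->
  (forall K, exists z, u < z /\ I z /\ K < Rint f u z) -> Int_to_b b f u = PInf.
Proof.
  intros Hf Hu Hpos HK.
  set (D := fun z => u < z /\ Rbar_lt (Fin z) b).
  assert (HDI : forall z, D z -> I z).
  { intros z [H1 H2]. split; auto. destruct Hu as [Hu _]. destruct a; simpl in *; auto; lra. }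
  assert (Hub : Rbar_lt (Fin u) b) by (destruct Hu; auto).
  unfold Int_to_b. apply limval_eq.
  { apply (Fgood_b b u); [exact Hub| intros z H1 H2; split; auto]. }
  apply (mono_lim_b_inf b u D (Rint f u)).
  - intros z [_ H]; auto.
  - intros z z' H1 H2 Dz Dz'. apply Itb_mono; auto; lra.
  - intros K. destruct (HK K) as [z [H1 [H2 H3]]]. exists z; split; [exact H1|split; [split; [exact H1| destruct H2; auto]| exact H3]].
Qed.

Lemma Itb_cases f u : contI a b f -> I u -> (forall t, u < t -> I t -> 0 <= f t) ->
  (exists L, Int_to_b b f u = Fin L /\ supP (fun z => u < z /\ I z) (Rint f u) L) \/
  (Int_to_b b f u = PInf /\ forall K, exists z, u < z /\ I z /\ K < Rint f u z).
Proof.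
  intros Hf Hu Hpos.
  destruct (classic (exists K, forall z, u < z -> I z -> Rint f u z <= K)) as [[K HK]|HK].
  - left. apply (Itb_fin f u K); auto.
  - right. assert (HK' : forall K, exists z, u < z /\ I z /\ K < Rint f u z).
    { intros K. apply NNPP; intro Hn. apply HK. exists K. intros z H1 H2.
      apply Rnot_lt_le; intro H3; apply Hn; exists z; auto. }
    split; auto. apply Itb_inf; auto.
Qed.

Lemma Itb_fin_sup f u L : contI a b f -> I u -> (forall t, u < t -> I t -> 0 <= f t) ->
  Int_to_b b f u = Fin L -> supP (fun z => u < z /\ I z) (Rint f u) L.
Proof.
  intros Hf Hu Hpos HL. destruct (Itb_cases f u Hf Hu Hpos) as [[L' [H1 H2]]|[H1 _]];
    rewrite HL in H1; [injection H1 as ->; auto| discriminate].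
Qed.

Lemma Itb_shift f x0 u L0 : contI a b f -> I x0 -> I u -> (forall t, I t -> 0 <= f t) ->
  Int_to_b b f x0 = Fin L0 -> Int_to_b b f u = Fin (L0 + Rint f u x0).
Proof.
  intros Hf Hx0 Hu Hpos H0.
  assert (Hpos' : forall w t, w < t -> I t -> 0 <= f t) by (intros; auto).
  destruct (Itb_fin_sup f x0 L0 Hf Hx0 (Hpos' x0) H0) as [S1 S2].
  assert (HL0 : 0 <= L0).
  { destruct (I_above x0 Hx0) as [z [Hz1 Hz2]]. specialize (S1 z (conj Hz1 Hz2)).
    pose proof (Rint_ge0 a b f x0 z Hf Hx0 Hz2 ltac:(lra) ltac:(intros; apply Hpos; apply (I_between a b x0 z); auto; lra)). lra. }
  assert (Hsp : supP (fun z => u < z /\ I z) (Rint f u) (L0 + Rint f u x0)).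
  { split.
    - intros z [Hz1 Hz2]. rewrite <- (Rint_chasles a b f u x0 z); auto.
      destruct (Rle_dec x0 z).
      + destruct (Req_dec x0 z) as [<-|Hne].
        * rewrite (Rint_refl a b); auto. lra.
        * assert (x0 < z) by (destruct r; [auto|contradiction]). specialize (S1 z (conj H Hz2)). lra.
      + rewrite (Rint_swap a b f x0 z); auto.
        pose proof (Rint_ge0 a b f z x0 Hf Hz2 Hx0 ltac:(lra) ltac:(intros; apply Hpos; apply (I_between a b z x0); auto; lra)). lra.
    - intros e He. destruct (S2 e He) as [z1 [[Hz1 Hz1'] Hz1e]].
      destruct (I_above (Rmax u z1)) as [z [Hz Hz']].
      { destruct (Rle_dec u z1); [rewrite Rmax_right|rewrite Rmax_left]; auto; lra. }
      pose proof (Rmax_l u z1); pose proof (Rmax_r u z1).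
      exists z; split; [split; auto; lra|].
      rewrite <- (Rint_chasles a b f u x0 z); auto.
      assert (Rint f x0 z1 <= Rint f x0 z) by (apply Itb_mono; auto; lra). lra. }
  destruct (Itb_cases f u Hf Hu (Hpos' u)) as [[L [H1 H2]]|[H1 H2]].
  - rewrite H1. f_equal. apply (supP_unique _ _ _ _ H2 Hsp).
  - destruct Hsp as [Hs _]. destruct (H2 (L0 + Rint f u x0)) as [z [Hz1 [Hz2 Hz3]]].
    specialize (Hs z (conj Hz1 Hz2)). lra.
Qed.

Lemma Ifa_fin f x K : contI a b f -> I x -> (forall t, t < x -> I t -> 0 <= f t) ->
  (forall y, y < x -> I y -> Rint f y x <= K) ->
  exists L, Int_from_a a f x = Fin L /\ supP (fun y => y < x /\ I y) (fun y => Rint f y x) L.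
Proof.
  intros Hf Hx Hpos HK.
  set (D := fun y => Rbar_lt a (Fin y) /\ y < x).
  assert (HDI : forall y, D y -> I y).
  { intros y [H1 H2]. split; auto. destruct Hx as [_ Hx]. destruct b; simpl in *; auto; lra. }
  assert (Hax : Rbar_lt a (Fin x)) by (destruct Hx; auto).
  assert (Hmon : forall z z', z <= z' -> z' < x -> D z -> D z' -> Rint f z' x <= Rint f z x).
  { intros z z' H1 H2 Dz Dz'. pose proof (HDI z Dz); pose proof (HDI z' Dz').
    rewrite <- (Rint_chasles a b f z z' x); auto.
    assert (0 <= Rint f z z'); [|lra].
    apply (Rint_ge0 a b f z z' Hf (HDI z Dz) (HDI z' Dz') H1).
    intros t Ht. apply Hpos; [lra|]. apply (I_between a b z z'); [exact (HDI z Dz)|exact (HDI z' Dz')|lra]. }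
  destruct (mono_lim_a a x D (fun y => Rint f y x) K Hax) as [L [HL1 [HL2 HL3]]].
  - intros z H1 H2; split; auto.
  - intros z [H _]; auto.
  - exact Hmon.
  - intros z H Dz. apply HK; auto.
  - exists L; split.
    + unfold Int_from_a. apply limval_eq; auto. apply (Fgood_a a x); [exact Hax| intros z H1 H2; split; auto].
    + split.
      * intros z [H1 H2]. apply HL2; auto. split; auto. destruct H2; auto.
      * intros e He. destruct (HL3 e He) as [z [H1 [H2 H3]]]. exists z; auto.
Qed.

Lemma Ifa_inf f x : contI a b f -> I x -> (forall t, t < x -> I t -> 0 <= f t) ->
  (forall K, exists y, y < x /\ I y /\ K < Rint f y x) -> Int_from_a a f x = PInf.
Proof.
  intros Hf Hx Hpos HK.
  set (D := fun y => Rbar_lt a (Fin y) /\ y < x).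
  assert (HDI : forall y, D y -> I y).
  { intros y [H1 H2]. split; auto. destruct Hx as [_ Hx]. destruct b; simpl in *; auto; lra. }
  assert (Hax : Rbar_lt a (Fin x)) by (destruct Hx; auto).
  unfold Int_from_a. apply limval_eq.
  { apply (Fgood_a a x); [exact Hax| intros z H1 H2; split; auto]. }
  apply (mono_lim_a_inf a x D (fun y => Rint f y x)).
  - intros z [H _]; auto.
  - intros z z' H1 H2 Dz Dz'. pose proof (HDI z Dz); pose proof (HDI z' Dz').
    rewrite <- (Rint_chasles a b f z z' x); auto.
    assert (0 <= Rint f z z'); [|lra].
    apply (Rint_ge0 a b); auto. intros t Ht. apply Hpos; [lra|]. apply (I_between a b z z'); auto; lra.
  - intros K. destruct (HK K) as [z [H1 [H2 H3]]]. exists z; split; [exact H1|split; [split; [destruct H2; auto| exact H1]| exact H3]].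
Qed.

Lemma Ifa_cases f x : contI a b f -> I x -> (forall t, t < x -> I t -> 0 <= f t) ->
  (exists L, Int_from_a a f x = Fin L /\ supP (fun y => y < x /\ I y) (fun y => Rint f y x) L) \/
  (Int_from_a a f x = PInf /\ forall K, exists y, y < x /\ I y /\ K < Rint f y x).
Proof.
  intros Hf Hx Hpos.
  destruct (classic (exists K, forall y, y < x -> I y -> Rint f y x <= K)) as [[K HK]|HK].
  - left. apply (Ifa_fin f x K); auto.
  - right. assert (HK' : forall K, exists y, y < x /\ I y /\ K < Rint f y x).
    { intros K. apply NNPP; intro Hn. apply HK. exists K. intros z H1 H2.
      apply Rnot_lt_le; intro H3; apply Hn; exists z; auto. }
    split; auto. apply Ifa_inf; auto.
Qed.

End Tails.

Lemma cpt_mult f g x : continuity_pt f x -> continuity_pt g x -> continuity_pt (fun t => f t * g t) x.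
Proof. intros; exact (continuity_pt_mult f g x H H0). Qed.
Lemma cpt_plus f g x : continuity_pt f x -> continuity_pt g x -> continuity_pt (fun t => f t + g t) x.
Proof. intros; exact (continuity_pt_plus f g x H H0). Qed.
Lemma cpt_minus f g x : continuity_pt f x -> continuity_pt g x -> continuity_pt (fun t => f t - g t) x.
Proof. intros; exact (continuity_pt_minus f g x H H0). Qed.
Lemma cpt_opp f x : continuity_pt f x -> continuity_pt (fun t => - f t) x.
Proof. intros; exact (continuity_pt_opp f x H). Qed.
Lemma cpt_const (c x : R) : continuity_pt (fun _ => c) x.
Proof. apply continuity_pt_const. intros ? ?; reflexivity. Qed.
Lemma cpt_inv f x : continuity_pt f x -> f x <> 0 -> continuity_pt (fun t => / f t) x.
Proof. intros; exact (continuity_pt_inv f x H H0). Qed.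
Lemma cpt_exp f x : continuity_pt f x -> continuity_pt (fun t => exp (f t)) x.
Proof. intros H. exact (continuity_pt_comp f exp x H (derivable_continuous_pt exp (f x) (derivable_pt_exp (f x)))). Qed.

Section Cmp.
Variables (a b : Rbar).
Let I := inI a b.

Lemma unb_cmp f g x0 x1 c : contI a b f -> contI a b g -> I x0 -> I x1 -> x0 <= x1 -> 0 < c ->
  (forall t, x0 < t -> I t -> 0 <= f t) -> (forall t, x0 < t -> I t -> 0 <= g t) ->
  (forall t, x1 < t -> I t -> c * g t <= f t) ->
  (forall K, exists z, x0 < z /\ I z /\ K < Rint g x0 z) ->
  (forall K, exists z, x0 < z /\ I z /\ K < Rint f x0 z).
Proof.
  intros Hf Hg Hx0 Hx1 H01 Hc Hfp Hgp Hfg Hu K.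
  destruct (Hu (Rabs K / c + Rint g x0 x1)) as [z [Hz1 [Hz2 Hz3]]].
  assert (HK : 0 <= Rabs K / c) by (apply Rmult_le_pos; [apply Rabs_pos|left; apply Rinv_0_lt_compat; auto]).
  assert (Hzx1 : x1 < z).
  { apply Rnot_le_lt; intro Hle.
    assert (Rint g x0 z <= Rint g x0 x1) by (apply (Itb_mono a b); auto; lra). lra. }
  exists z; split; auto; split; auto.
  rewrite <- (Rint_chasles a b f x0 x1 z); auto.
  rewrite <- (Rint_chasles a b g x0 x1 z) in Hz3; auto.
  assert (H1 : 0 <= Rint f x0 x1).
  { apply (Rint_ge0 a b); auto. intros t Ht. apply Hfp; [lra|]. apply (I_between a b x0 x1); auto; lra. }
  assert (H2 : c * Rint g x1 z <= Rint f x1 z).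
  { rewrite <- (Rint_scal a b g c); auto. apply (Rint_le a b); auto; try lra.
    - intros t Ht. apply cpt_mult; [apply cpt_const|apply Hg; auto].
    - intros t Ht. apply Hfg; [lra|]. apply (I_between a b x1 z); auto; lra. }
  assert (H3 : Rabs K < c * Rint g x1 z).
  { assert (Rabs K / c < Rint g x1 z) by lra.
    apply (Rmult_lt_compat_l c) in H; auto. unfold Rdiv in H. rewrite <- Rmult_assoc, (Rmult_comm c), Rmult_assoc, Rinv_r, Rmult_1_r in H; lra. }
  pose proof (Rle_abs K). lra.
Qed.

End Cmp.

Section More.
Variables (a b : Rbar).
Local Notation I := (inI a b).

Lemma Rint_ext_I f g x y : contI a b g -> (forall t, I t -> f t = g t) -> I x -> I y ->
  Rint f x y = Rint g x y.
Proof.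
  intros Hg He Hx Hy. assert (Hf : contI a b f) by (apply (contI_ext a b f g); auto).
  rewrite (RintE a b f), (RintE a b g); auto. apply RInt_ext.
  intros t Ht. apply He. destruct (Rle_dec x y).
  - rewrite Rmin_left, Rmax_right in Ht by lra. apply (I_between a b x y); auto; lra.
  - rewrite Rmin_right, Rmax_left in Ht by lra. apply (I_between a b y x); auto; lra.
Qed.

Lemma tail_pos f u L : contI a b f -> (forall t, I t -> 0 < f t) -> I u ->
  Int_to_b b f u = Fin L -> 0 < L.
Proof.
  intros Hf Hp Hu HL.
  destruct (Itb_fin_sup a b f u L Hf Hu (fun t _ Ht => Rlt_le _ _ (Hp t Ht)) HL) as [H1 _].
  destruct (I_above a b u Hu) as [z [Hz1 Hz2]].
  specialize (H1 z (conj Hz1 Hz2)).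
  assert (0 < Rint f u z); [|lra].
  apply (Rint_gt0 a b); auto. intros t Ht. apply Hp, (I_between a b u z); auto; lra.
Qed.

Lemma tail_nonneg f u L : contI a b f -> (forall t, I t -> 0 <= f t) -> I u ->
  Int_to_b b f u = Fin L -> 0 <= L.
Proof.
  intros Hf Hp Hu HL.
  destruct (Itb_fin_sup a b f u L Hf Hu (fun t _ Ht => Hp t Ht) HL) as [H1 _].
  destruct (I_above a b u Hu) as [z [Hz1 Hz2]].
  specialize (H1 z (conj Hz1 Hz2)).
  assert (0 <= Rint f u z); [|lra].
  apply (Rint_ge0 a b); auto; try lra. intros t Ht. apply Hp, (I_between a b u z); auto; lra.
Qed.

End More.

Lemma supP_le P g L B : supP P g L -> (forall z, P z -> g z <= B) -> L <= B.
Proof.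
  intros [H1 H2] H. apply Rnot_lt_le. intro Hlt. destruct (H2 (L - B)) as [z [Pz Hz]]; [lra|].
  specialize (H z Pz). lra.
Qed.

Lemma extE_I a b f x : inI a b x -> extE a b f x = Fin (f x).
Proof.
  intros Hx. unfold extE. destruct (excluded_middle_informative (inI a b x)); [reflexivity|contradiction].
Qed.

Lemma extE_out a b f x : ~ inI a b x ->
  extE a b f x = Rbar_limval (Rnbhd (Fin x)) (inI a b) (fun y => Fin (f y)).
Proof.
  intros Hx. unfold extE. destruct (excluded_middle_informative (inI a b x)); [contradiction|reflexivity].
Qed.

Section Diff.
Variables (a b : Rbar) (mu sigma : R -> R) (x0 : R) (a_refl : Prop) (c0 : R -> R) (c1 : R -> R -> Rbar).
Hypothesis HS : Setting a b mu sigma x0 a_refl.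
Hypothesis HA : ConditionA a b mu sigma x0 a_refl.
Hypothesis HB : ConditionB a b mu sigma x0 a_refl c0 c1.

Local Notation I := (inI a b).
Local Notation s := (sdens mu sigma x0).
Local Notation m := (mdens mu sigma x0).
Local Notation E := (inE a b mu sigma x0).

Lemma Hab : Rbar_lt a b.
Proof. destruct HS; auto. Qed.
Lemma Hx0 : I x0.
Proof. destruct HS as [_ [H _]]; auto. Qed.
Lemma Hms x : I x -> continuity_pt mu x /\ continuity_pt sigma x /\ sigma x <> 0.
Proof. destruct HS as [_ [_ [H _]]]; auto. Qed.

Lemma IE x : I x -> E x.
Proof. intros H; left; exact H. Qed.

Lemma h_cont : contI a b (fun u => 2 * mu u / (sigma u) ^ 2).
Proof.
  intros x Hx. destruct (Hms x Hx) as [H1 [H2 H3]]. unfold Rdiv.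
  apply cpt_mult; [apply cpt_mult; [apply cpt_const|auto]|].
  apply cpt_inv; [simpl; apply cpt_mult; [auto| apply cpt_mult; [auto|apply cpt_const]]|].
  apply pow_nonzero; auto.
Qed.

Lemma s_pos x : 0 < s x.
Proof. unfold sdens. apply exp_pos. Qed.

Lemma s_cont : contI a b s.
Proof.
  intros x Hx. unfold sdens. apply cpt_exp, cpt_opp.
  apply (Rint_cont a b); [apply h_cont|apply Hx0|auto].
Qed.

Lemma sig2_pos x : I x -> 0 < (sigma x) ^ 2.
Proof. intros Hx. destruct (Hms x Hx) as [_ [_ H]]. simpl. rewrite Rmult_1_r. 
  apply Rsqr_pos_lt in H. exact H. Qed.

Lemma m_pos x : I x -> 0 < m x.
Proof.
  intros Hx. unfold mdens. apply Rinv_0_lt_compat. apply Rmult_lt_0_compat.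
  apply sig2_pos; auto. apply s_pos.
Qed.

Lemma m_cont : contI a b m.
Proof.
  intros x Hx. unfold mdens. apply cpt_inv.
  - apply cpt_mult; [|apply s_cont; auto]. destruct (Hms x Hx) as [_ [H2 _]].
    simpl. apply cpt_mult; [auto| apply cpt_mult; [auto|apply cpt_const]].
  - apply Rgt_not_eq. apply Rmult_lt_0_compat. apply sig2_pos; auto. apply s_pos.
Qed.

Lemma c0_cont : contI a b c0.
Proof.
  intros x Hx. destruct HB as [_ [Hc _]].
  specialize (Hc x (IE x Hx)).
  apply continuity_pt_locally. intros eps.
  pose proof (filterlim_fin_inv _ _ c0 (c0 x) (Rnbhd_mono (Fin x)) Hc eps (cond_pos eps)) as [d [Hd H]].
  destruct (I_open a b x Hx) as [d2 [Hd2 H2]].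
  exists (mkposreal (Rmin d d2) (Rmin_pos _ _ Hd Hd2)). intros y Hy.
  change (Rabs (y - x) < Rmin d d2) in Hy.
  pose proof (Rmin_l d d2); pose proof (Rmin_r d d2).
  apply H; [lra|]. apply IE, H2; lra.
Qed.

Lemma c0_nonneg x : E x -> 0 <= c0 x.
Proof. destruct HB as [H _]; auto. Qed.

Lemma Sfun_eq x : I x -> Sfun mu sigma x0 x = Rint s x0 x.
Proof. reflexivity. Qed.

Lemma S_unb : forall K, exists z, x0 < z /\ I z /\ K < Rint s x0 z.
Proof.
  destruct HA as [_ [H2 _]]. specialize (H2 x0 Hx0).
  destruct (Itb_cases a b s x0 s_cont Hx0 (fun t _ _ => Rlt_le _ _ (s_pos t))) as [[L [HL _]]|[_ H]].
  - idtac. rewrite H2 in HL. discriminate.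
  - exact H.
Qed.

Lemma Sa_ex : exists Sa, forall y, y < x0 -> I y -> Rint s y x0 <= Sa.
Proof.
  destruct HA as [H1 _]. destruct (H1 x0 Hx0) as [Sa HSa].
  destruct (Ifa_cases a b s x0 s_cont Hx0 (fun t _ _ => Rlt_le _ _ (s_pos t))) as [[L [HL [H _]]]|[HL _]].
  - exists L. intros y Hy1 Hy2. apply H; auto.
  - idtac. rewrite HSa in HL; discriminate.
Qed.

Lemma Mfun_cont : contI a b (Mfun mu sigma x0).
Proof. intros x Hx. apply (Rint_cont a b); [apply m_cont|apply Hx0|auto]. Qed.
Lemma Sfun_cont : contI a b (Sfun mu sigma x0).
Proof. intros x Hx. apply (Rint_cont a b); [apply s_cont|apply Hx0|auto]. Qed.

Lemma Tm_fin : exists Mb, Int_to_b b m x0 = Fin Mb.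
Proof.
  destruct (Itb_cases a b m x0 m_cont Hx0 (fun t _ Ht => Rlt_le _ _ (m_pos t Ht))) as [[L [HL _]]|[HL Hunb]].
  - exists L; auto.
  - exfalso.
    destruct (I_above a b x0 Hx0) as [x1 [Hx1 Hx1I]].
    assert (HM1 : 0 < Rint m x0 x1) by (apply (Rint_gt0 a b); auto; [apply m_cont|apply Hx0|intros t Ht; apply m_pos, (I_between a b x0 x1); auto; [apply Hx0|lra]]).
    assert (HS1 : 0 < Rint s x0 x1) by (apply (Rint_gt0 a b); auto; [apply s_cont|apply Hx0|intros t Ht; apply s_pos]).
    assert (Hnat : natural_b b mu sigma x0).
    { split.
      - unfold SigmaB. apply (Itb_inf a b).
        + intros x Hx. apply cpt_mult; [apply cpt_minus; [apply Mfun_cont; auto|apply cpt_const]|apply s_cont; auto].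
        + apply Hx0.
        + intros t Ht HtI. apply Rmult_le_pos; [|left; apply s_pos].
          unfold Mfun. rewrite (Rint_refl a b); [|apply m_cont|apply Hx0].
          assert (0 <= Rint m x0 t); [|lra].
          apply (Rint_ge0 a b); auto; [apply m_cont|apply Hx0|lra|intros; left; apply m_pos, (I_between a b x0 t); auto; [apply Hx0|lra]].
        + apply (unb_cmp a b _ s x0 x1 (Rint m x0 x1)); auto.
          * intros x Hx. apply cpt_mult; [apply cpt_minus; [apply Mfun_cont; auto|apply cpt_const]|apply s_cont; auto].
          * apply s_cont.
          * apply Hx0.
          * lra.
          * intros t Ht HtI. apply Rmult_le_pos; [|left; apply s_pos].
            unfold Mfun. rewrite (Rint_refl a b); [|apply m_cont|apply Hx0].
            assert (0 <= Rint m x0 t); [|lra].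
            apply (Rint_ge0 a b); auto; [apply m_cont|apply Hx0|lra|intros; left; apply m_pos, (I_between a b x0 t); auto; [apply Hx0|lra]].
          * intros t _ _; left; apply s_pos.
          * intros t Ht HtI. apply Rmult_le_compat_r; [left; apply s_pos|].
            unfold Mfun. rewrite (Rint_refl a b); [|apply m_cont|apply Hx0].
            rewrite <- (Rint_chasles a b m x0 x1 t); auto; [|apply m_cont|apply Hx0].
            assert (0 <= Rint m x1 t); [|lra].
            apply (Rint_ge0 a b); auto; [apply m_cont|lra|intros; left; apply m_pos, (I_between a b x1 t); auto; lra].
          * exact S_unb.
      - unfold NB. apply (Itb_inf a b).
        + intros x Hx. apply cpt_mult; [apply cpt_minus; [apply Sfun_cont; auto|apply cpt_const]|apply m_cont; auto].
        + apply Hx0.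
        + intros t Ht HtI. apply Rmult_le_pos; [|left; apply m_pos; auto].
          unfold Sfun. rewrite (Rint_refl a b); [|apply s_cont|apply Hx0].
          assert (0 <= Rint s x0 t); [|lra].
          apply (Rint_ge0 a b); auto; [apply s_cont|apply Hx0|lra|intros; left; apply s_pos].
        + apply (unb_cmp a b _ m x0 x1 (Rint s x0 x1)); auto.
          * intros x Hx. apply cpt_mult; [apply cpt_minus; [apply Sfun_cont; auto|apply cpt_const]|apply m_cont; auto].
          * apply m_cont.
          * apply Hx0.
          * lra.
          * intros t Ht HtI. apply Rmult_le_pos; [|left; apply m_pos; auto].
            unfold Sfun. rewrite (Rint_refl a b); [|apply s_cont|apply Hx0].
            assert (0 <= Rint s x0 t); [|lra].
            apply (Rint_ge0 a b); auto; [apply s_cont|apply Hx0|lra|intros; left; apply s_pos].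
          * intros t _ Ht; left; apply m_pos; auto.
          * intros t Ht HtI. apply Rmult_le_compat_r; [left; apply m_pos; auto|].
            unfold Sfun. rewrite (Rint_refl a b); [|apply s_cont|apply Hx0].
            rewrite <- (Rint_chasles a b s x0 x1 t); auto; [|apply s_cont|apply Hx0].
            assert (0 <= Rint s x1 t); [|lra].
            apply (Rint_ge0 a b); auto; [apply s_cont|lra|intros; left; apply s_pos].
          }
    destruct HA as [_ [_ [_ [H4 _]]]]. destruct (H4 Hnat x0 Hx0) as [r Hr].
    idtac. rewrite Hr in HL. discriminate.
Qed.


Definition Mb := Rbar_real (Int_to_b b m x0).
Definition c2m := fun v => 2 * c0 v * m v.
Definition Cb := Rbar_real (Int_to_b b c2m x0).

Lemma Mb_eq : Int_to_b b m x0 = Fin Mb.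
Proof. destruct Tm_fin as [L HL]. unfold Mb. rewrite HL. reflexivity. Qed.

Lemma c2m_cont : contI a b c2m.
Proof. intros x Hx. unfold c2m. apply cpt_mult; [apply cpt_mult; [apply cpt_const|apply c0_cont; auto]|apply m_cont; auto]. Qed.

Lemma c2m_nonneg t : I t -> 0 <= c2m t.
Proof. intros Ht. unfold c2m. apply Rmult_le_pos; [apply Rmult_le_pos; [lra|apply c0_nonneg, IE; auto]|left; apply m_pos; auto]. Qed.

Lemma Cb_eq : Int_to_b b c2m x0 = Fin Cb.
Proof.
  destruct HB as [_ [_ [_ [_ [_ [_ [H7 _]]]]]]]. destruct (H7 x0 Hx0) as [L HL].
  assert (Hcm : contI a b (fun v => c0 v * m v)).
  { intros x Hx. apply cpt_mult; [apply c0_cont; auto|apply m_cont; auto]. }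
  pose proof (Itb_fin_sup a b _ x0 L Hcm Hx0 (fun t _ Ht => Rmult_le_pos _ _ (c0_nonneg t (IE t Ht)) (Rlt_le _ _ (m_pos t Ht))) HL) as [H1 _].
  destruct (Itb_fin a b c2m x0 (2 * L) c2m_cont Hx0 (fun t _ Ht => c2m_nonneg t Ht)) as [L' [HL' _]].
  - intros z Hz1 Hz2. unfold c2m.
    replace (fun v => 2 * c0 v * m v) with (fun v => 2 * (c0 v * m v)) by (apply functional_extensionality; intro; ring).
    rewrite (Rint_scal a b); auto; [|apply Hx0]. specialize (H1 z (conj Hz1 Hz2)). lra.
  - unfold Cb. rewrite HL'. reflexivity.
Qed.

Lemma Tm_u u : I u -> Int_to_b b m u = Fin (Mb + Rint m u x0).
Proof. intros Hu. apply (Itb_shift a b); auto; [apply m_cont|apply Hx0|intros; left; apply m_pos; auto|apply Mb_eq]. Qed.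

Lemma Tc_u u : I u -> Int_to_b b c2m u = Fin (Cb + Rint c2m u x0).
Proof. intros Hu. apply (Itb_shift a b); auto; [apply c2m_cont|apply Hx0|intros; apply c2m_nonneg; auto|apply Cb_eq]. Qed.

Lemma Tm_pos u : I u -> 0 < Mb + Rint m u x0.
Proof. intros Hu. apply (tail_pos a b m u); auto; [apply m_cont|intros; apply m_pos; auto|apply Tm_u; auto]. Qed.

Lemma Tc_nonneg u : I u -> 0 <= Cb + Rint c2m u x0.
Proof. intros Hu. apply (tail_nonneg a b c2m u); auto; [apply c2m_cont|intros; apply c2m_nonneg; auto|apply Tc_u; auto]. Qed.

Definition zp u := 2 * (Mb + Rint m u x0) * s u.
Definition gp u := (Cb + Rint c2m u x0) * s u.

Lemma zp_cont : contI a b zp.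
Proof.
  intros x Hx. unfold zp. apply cpt_mult; [apply cpt_mult; [apply cpt_const|apply cpt_plus; [apply cpt_const|]]|apply s_cont; auto].
  apply (Rint_cont_l a b); auto; [apply m_cont|apply Hx0].
Qed.

Lemma gp_cont : contI a b gp.
Proof.
  intros x Hx. unfold gp. apply cpt_mult; [apply cpt_plus; [apply cpt_const|]|apply s_cont; auto].
  apply (Rint_cont_l a b); auto; [apply c2m_cont|apply Hx0].
Qed.

Lemma zp_pos u : I u -> 0 < zp u.
Proof. intros Hu. unfold zp. apply Rmult_lt_0_compat; [|apply s_pos]. pose proof (Tm_pos u Hu); lra. Qed.

Lemma gp_nonneg u : I u -> 0 <= gp u.
Proof. intros Hu. unfold gp. apply Rmult_le_pos; [apply Tc_nonneg; auto|left; apply s_pos]. Qed.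

Notation Z := (zetafun b mu sigma x0).
Notation G := (g0fun b mu sigma x0 c0).

Lemma Z_I x : I x -> Z x = Rint zp x0 x.
Proof.
  intros Hx. unfold zetafun. apply (Rint_ext_I a b); auto; [apply zp_cont| |apply Hx0].
  intros t Ht. unfold zp. rewrite Tm_u; auto.
Qed.

Lemma G_I x : I x -> G x = Rint gp x0 x.
Proof.
  intros Hx. unfold g0fun. apply (Rint_ext_I a b); auto; [apply gp_cont| |apply Hx0].
  intros t Ht. unfold gp. fold (c2m). rewrite Tc_u; auto.
Qed.

Lemma Z_diff y z : I y -> I z -> Z z - Z y = Rint zp y z.
Proof.
  intros Hy Hz. rewrite !Z_I; auto. rewrite <- (Rint_chasles a b zp x0 y z); auto; [ring|apply zp_cont|apply Hx0].
Qed.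

Lemma G_diff y z : I y -> I z -> G z - G y = Rint gp y z.
Proof.
  intros Hy Hz. rewrite !G_I; auto. rewrite <- (Rint_chasles a b gp x0 y z); auto; [ring|apply gp_cont|apply Hx0].
Qed.

Lemma Z_strict y z : I y -> I z -> y < z -> Z y < Z z.
Proof.
  intros Hy Hz Hyz. assert (0 < Z z - Z y); [|lra]. rewrite Z_diff; auto.
  apply (Rint_gt0 a b); auto; [apply zp_cont|]. intros t Ht; apply zp_pos, (I_between a b y z); auto; lra.
Qed.

Lemma G_mono y z : I y -> I z -> y <= z -> G y <= G z.
Proof.
  intros Hy Hz Hyz. assert (0 <= G z - G y); [|lra]. rewrite G_diff; auto.
  apply (Rint_ge0 a b); auto; [apply gp_cont|]. intros t Ht; apply gp_nonneg, (I_between a b y z); auto; lra.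
Qed.

Lemma Z_x0 : Z x0 = 0.
Proof. rewrite Z_I; [apply (Rint_refl a b); [apply zp_cont|]|]; apply Hx0. Qed.
Lemma G_x0 : G x0 = 0.
Proof. rewrite G_I; [apply (Rint_refl a b); [apply gp_cont|]|]; apply Hx0. Qed.


Definition sig u := Rint m u x0 * s u.

Lemma sig_cont : contI a b sig.
Proof. intros x Hx. unfold sig. apply cpt_mult; [apply (Rint_cont_l a b); auto; [apply m_cont|apply Hx0]|apply s_cont; auto]. Qed.

Lemma sig_nonneg t : I t -> t <= x0 -> 0 <= sig t.
Proof.
  intros Ht Htx. unfold sig. apply Rmult_le_pos; [|left; apply s_pos].
  apply (Rint_ge0 a b); auto; [apply m_cont|apply Hx0|intros; left; apply m_pos, (I_between a b t x0); auto; [apply Hx0|lra]].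
Qed.

Lemma zp_split : zp = (fun u => (2 * Mb) * s u + 2 * sig u).
Proof. apply functional_extensionality; intro u. unfold zp, sig. ring. Qed.

Lemma Mb_pos : 0 < Mb.
Proof. pose proof (Tm_pos x0 Hx0). rewrite (Rint_refl a b) in H; [lra|apply m_cont|apply Hx0]. Qed.

Lemma Cb_nonneg : 0 <= Cb.
Proof. pose proof (Tc_nonneg x0 Hx0). rewrite (Rint_refl a b) in H; [lra|apply c2m_cont|apply Hx0]. Qed.

Lemma attain_fin : attainable_a a mu sigma x0 -> exists al, a = Fin al.
Proof.
  intros Hat. assert (Hc : (exists al, a = Fin al) \/ a = PInf \/ a = MInf) by (destruct a; eauto).
  destruct Hc as [H|[Ea|Ea]]; auto.
  - exfalso. pose proof Hab as H. rewrite Ea in H. destruct b; simpl in H; auto.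
  - exfalso. destruct HA as [_ [_ [_ [_ [H5 _]]]]]. destruct (H5 Ea) as [HSg _].
    destruct Hat as [[[r Hr] _]|[[r Hr] _]]; rewrite Hr in HSg; discriminate.
Qed.

Lemma Sig_bound : attainable_a a mu sigma x0 -> exists Sg, forall w, w < x0 -> I w -> Rint sig w x0 <= Sg.
Proof.
  intros Hat. assert (HSf : is_finite (SigmaA a mu sigma x0)) by (destruct Hat as [[H _]|[H _]]; auto).
  destruct HSf as [Sg HSg].
  set (f := fun u => (Mfun mu sigma x0 x0 - Mfun mu sigma x0 u) * s u).
  assert (Hfe : forall t, I t -> f t = sig t).
  { intros t Ht. unfold f, sig, Mfun. rewrite (Rint_refl a b); [|apply m_cont|apply Hx0].
    rewrite (Rint_swap a b m x0 t); [ring|apply m_cont|apply Hx0|auto]. }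
  assert (Hfc : contI a b f) by (apply (contI_ext a b f sig); auto; apply sig_cont).
  destruct (Ifa_cases a b f x0 Hfc Hx0) as [[L [HL [H1 _]]]|[HL _]].
  - intros t Ht1 Ht2. rewrite Hfe; auto. apply sig_nonneg; auto; lra.
  - exists L. intros w Hw1 Hw2. rewrite <- (Rint_ext_I a b f sig); auto; [apply sig_cont|apply Hx0].
  - unfold SigmaA in HSg. fold f in HSg. rewrite HL in HSg. discriminate.
Qed.

Notation ZEf := (zetaE a b mu sigma x0).
Notation GEf := (g0E a b mu sigma x0 c0).

Lemma ZE_I x : I x -> ZEf x = Fin (Z x).
Proof. intros Hx. unfold zetaE. apply extE_I; auto. Qed.
Lemma GE_I x : I x -> GEf x = Fin (G x).
Proof. intros Hx. unfold g0E. apply extE_I; auto. Qed.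

Lemma notI_a al : a = Fin al -> ~ I al.
Proof. intros Ha [H _]. rewrite Ha in H. simpl in H. lra. Qed.
Lemma notI_b be : b = Fin be -> ~ I be.
Proof. intros Hb [_ H]. rewrite Hb in H. simpl in H. lra. Qed.

Lemma lim_at_a (g : R -> R) al K : a = Fin al ->
  (forall y z, I y -> I z -> y <= z -> g y <= g z) ->
  (forall w, w < x0 -> I w -> K <= g w) ->
  exists ga, extE a b g al = Fin ga /\ forall w, I w -> ga <= g w.
Proof.
  intros Ha Hmon HK.
  assert (Hax0 : Rbar_lt a (Fin x0)) by (destruct Hx0; auto).
  assert (HD1 : forall z, Rbar_lt a (Fin z) -> z < x0 -> I z).
  { intros z H1 H2. split; auto. destruct Hx0 as [_ H]. destruct b; simpl in *; auto; lra. }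
  destruct (mono_lim_a a x0 I (fun y => - g y) (- K) Hax0 HD1) as [L [HL1 [HL2 _]]].
  - intros z [H _]; auto.
  - intros z z' H1 H2 Dz Dz'. pose proof (Hmon z z' Dz Dz' H1). lra.
  - intros z Hz Dz. specialize (HK z Hz Dz). lra.
  - exists (- L). split.
    + rewrite extE_out; [|apply notI_a; auto]. apply limval_eq.
      * rewrite <- Ha. apply (Fgood_a a x0); auto.
      * rewrite <- Ha. apply filterlim_opp_fin; [apply Rnbhd_mono|exact HL1].
    + intros w Hw. destruct (I_below a b (Rmin w x0)) as [w' [Hw'1 Hw'2]].
      { destruct (Rle_dec w x0); [rewrite Rmin_left|rewrite Rmin_right]; auto; [apply Hx0|lra]. }
      pose proof (Rmin_l w x0); pose proof (Rmin_r w x0).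
      specialize (HL2 w' ltac:(lra) Hw'2). pose proof (Hmon w' w Hw'2 Hw ltac:(lra)). lra.
Qed.

Lemma lim_at_b (g : R -> R) be K : b = Fin be ->
  (forall y z, I y -> I z -> y <= z -> g y <= g z) ->
  (forall w, x0 < w -> I w -> g w <= K) ->
  exists gb, extE a b g be = Fin gb /\ forall w, I w -> g w <= gb.
Proof.
  intros Hb Hmon HK.
  assert (Hbx0 : Rbar_lt (Fin x0) b) by (destruct Hx0; auto).
  assert (HD1 : forall z, x0 < z -> Rbar_lt (Fin z) b -> I z).
  { intros z H1 H2. split; auto. destruct Hx0 as [H _]. destruct a; simpl in *; auto; lra. }
  destruct (mono_lim_b b x0 I g K Hbx0 HD1) as [L [HL1 [HL2 _]]].
  - intros z [_ H]; auto.
  - intros z z' H1 H2 Dz Dz'. apply Hmon; auto.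
  - intros z Hz Dz. apply HK; auto.
  - exists L. split.
    + rewrite extE_out; [|apply notI_b; auto]. apply limval_eq.
      * rewrite <- Hb. apply (Fgood_b b x0); auto.
      * rewrite <- Hb. exact HL1.
    + intros w Hw. destruct (I_above a b (Rmax w x0)) as [w' [Hw'1 Hw'2]].
      { destruct (Rle_dec w x0); [rewrite Rmax_right|rewrite Rmax_left]; auto; [apply Hx0|lra]. }
      pose proof (Rmax_l w x0); pose proof (Rmax_r w x0).
      specialize (HL2 w' ltac:(lra) Hw'2). pose proof (Hmon w w' Hw Hw'2 ltac:(lra)). lra.
Qed.

Lemma ZE_a al : attainable_a a mu sigma x0 -> a = Fin al ->
  exists za, ZEf al = Fin za /\ forall w, I w -> za < Z w.
Proof.
  intros Hat Ha. destruct Sa_ex as [Sa HSa]. destruct (Sig_bound Hat) as [Sg HSg].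
  destruct (lim_at_a Z al (- (2 * Mb * Sa + 2 * Sg)) Ha) as [za [Hza1 Hza2]].
  - intros y z Hy Hz Hyz. destruct (Req_dec y z) as [->|Hne]; [lra|]. left; apply Z_strict; auto; lra.
  - intros w Hw1 Hw2. pose proof Z_x0.
    assert (Z x0 - Z w <= 2 * Mb * Sa + 2 * Sg); [|lra].
    rewrite Z_diff; auto; [|apply Hx0]. rewrite zp_split.
    rewrite (Rint_lin a b s sig); auto; [|apply s_cont|apply sig_cont|apply Hx0].
    pose proof (HSa w Hw1 Hw2). pose proof (HSg w Hw1 Hw2). pose proof Mb_pos.
    assert (2 * Mb * Rint s w x0 <= 2 * Mb * Sa) by (apply Rmult_le_compat_l; lra). lra.
  - exists za. split; [unfold zetaE; exact Hza1|].
    intros w Hw. destruct (I_below a b w Hw) as [w' [H1 H2]].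
    pose proof (Hza2 w' H2). pose proof (Z_strict w' w H2 Hw H1). lra.
Qed.


Lemma Rint_mono_up f u x y : contI a b f -> (forall t, I t -> 0 <= f t) -> I u -> I x -> I y -> u <= x -> x <= y ->
  Rint f u x <= Rint f u y.
Proof.
  intros Hf Hp Hu Hx Hy H1 H2. rewrite <- (Rint_chasles a b f u x y); auto.
  assert (0 <= Rint f x y); [|lra]. apply (Rint_ge0 a b); auto. intros t Ht; apply Hp, (I_between a b x y); auto; lra.
Qed.

Lemma Rint_mono_low f u x y : contI a b f -> (forall t, I t -> 0 <= f t) -> I u -> I x -> I y -> u <= x -> x <= y ->
  Rint f x y <= Rint f u y.
Proof.
  intros Hf Hp Hu Hx Hy H1 H2. rewrite <- (Rint_chasles a b f u x y); auto.
  assert (0 <= Rint f u x); [|lra]. apply (Rint_ge0 a b); auto. intros t Ht; apply Hp, (I_between a b u x); auto; lra.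
Qed.

Lemma c0_bound_at x : E x -> exists d, 0 < d /\ forall t, Rabs (t - x) < d -> E t -> c0 t < c0 x + 1.
Proof.
  intros Hx. destruct HB as [_ [Hc _]]. specialize (Hc x Hx).
  destruct (filterlim_fin_inv _ _ c0 (c0 x) (Rnbhd_mono (Fin x)) Hc 1 Rlt_0_1) as [d [Hd H]].
  exists d; split; auto. intros t Ht HtE. specialize (H t Ht HtE).
  unfold Rabs in H; destruct (Rcase_abs (c0 t - c0 x)); lra.
Qed.

Lemma GE_a al : attainable_a a mu sigma x0 -> a = Fin al ->
  exists ga, GEf al = Fin ga /\ forall w, I w -> ga <= G w.
Proof.
  intros Hat Ha. destruct Sa_ex as [Sa HSa]. destruct (Sig_bound Hat) as [Sg HSg].
  assert (HalE : E al) by (right; left; split; auto).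
  destruct (c0_bound_at al HalE) as [d [Hd Hc0]].
  pose proof (Rmin_l (al + d / 2) x0); pose proof (Rmin_r (al + d / 2) x0).
  assert (Hx1a : al < Rmin (al + d / 2) x0) by (apply Rmin_glb_lt; [lra|destruct Hx0 as [H' _]; rewrite Ha in H'; exact H']).
  set (x1 := Rmin (al + d / 2) x0) in *.
  assert (Halx0 : al < x0) by (destruct Hx0 as [H' _]; rewrite Ha in H'; exact H').
  assert (Hx1 : I x1).
  { split; [rewrite Ha; simpl; lra|].
    destruct Hx0 as [_ H']. destruct b; simpl in *; auto; lra. }
  set (C := c0 al + 1).
  assert (HC : 0 < C) by (pose proof (c0_nonneg al HalE); unfold C; lra).
  set (K1 := Rint c2m x1 x0).
  assert (HK1 : 0 <= K1).
  { apply (Rint_ge0 a b); auto; [apply c2m_cont|apply Hx0|intros; apply c2m_nonneg, (I_between a b x1 x0); auto; [apply Hx0|lra]]. }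
  pose proof Cb_nonneg as HCb.
  set (B := (Cb + K1) * Sa + 2 * C * Sg).
  assert (HB0 : forall w, w < x1 -> I w -> Rint gp w x1 <= B).
  { intros w Hw1 Hw2.
    assert (Hle : Rint gp w x1 <= Rint (fun u => (Cb + K1) * s u + 2 * C * sig u) w x1).
    { apply (Rint_le a b); auto; try lra; [apply gp_cont| |].
      - intros x Hx. apply cpt_plus; apply cpt_mult; try apply cpt_const; [apply s_cont|apply sig_cont]; auto.
      - intros u Hu. assert (HuI : I u) by (apply (I_between a b w x1); auto; lra).
        unfold gp, sig.
        assert (Hm1 : Rint c2m u x1 <= 2 * C * Rint m u x1).
        { rewrite <- (Rint_scal a b m); auto; [|apply m_cont].
          apply (Rint_le a b); auto; try lra; [apply c2m_cont| |].
          - intros x Hx. apply cpt_mult; [apply cpt_const|apply m_cont; auto].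
          - intros t Ht. assert (HtI : I t) by (apply (I_between a b u x1); auto; lra).
            unfold c2m. assert (c0 t < C).
            { assert (al < t) by (destruct HtI as [H' _]; rewrite Ha in H'; exact H').
              apply Hc0; [|apply IE; auto]. rewrite Rabs_right; lra. }
            pose proof (m_pos t HtI). pose proof (c0_nonneg t (IE t HtI)). nra. }
        assert (Hm2 : Rint m u x1 <= Rint m u x0).
        { apply (Rint_mono_up m u x1 x0); auto; [apply m_cont|intros; left; apply m_pos; auto|apply Hx0|lra]. }
        assert (Hc2 : Rint c2m u x0 = Rint c2m u x1 + K1).
        { unfold K1. rewrite (Rint_chasles a b c2m u x1 x0); auto; [apply c2m_cont|apply Hx0]. }
        pose proof (s_pos u). rewrite Hc2.
        assert (Hq : Rint c2m u x1 <= 2 * C * Rint m u x0).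
        { assert (2 * C * Rint m u x1 <= 2 * C * Rint m u x0) by (apply Rmult_le_compat_l; lra). lra. }
        assert (Rint c2m u x1 * s u <= 2 * C * Rint m u x0 * s u) by (apply Rmult_le_compat_r; lra).
        lra. }
    rewrite (Rint_lin a b s sig) in Hle; auto; [|apply s_cont|apply sig_cont].
    assert (Rint s w x1 <= Sa).
    { pose proof (HSa w ltac:(lra) Hw2). pose proof (Rint_mono_up s w x1 x0 s_cont (fun t _ => Rlt_le _ _ (s_pos t)) Hw2 Hx1 Hx0 ltac:(lra) ltac:(lra)). lra. }
    assert (Rint sig w x1 <= Sg).
    { pose proof (HSg w ltac:(lra) Hw2) as Hsw.
      assert (0 <= Rint sig x1 x0) by (apply (Rint_ge0 a b); auto; [apply sig_cont|apply Hx0|intros; apply sig_nonneg; [apply (I_between a b x1 x0); auto; [apply Hx0|lra]|lra]]).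
      rewrite <- (Rint_chasles a b sig w x1 x0) in Hsw; auto; [lra|apply sig_cont|apply Hx0]. }
    unfold B. assert ((Cb + K1) * Rint s w x1 <= (Cb + K1) * Sa) by (apply Rmult_le_compat_l; lra).
    assert (2 * C * Rint sig w x1 <= 2 * C * Sg) by (apply Rmult_le_compat_l; lra). lra. }
  assert (HB0' : 0 <= B).
  { destruct (I_below a b x1 Hx1) as [w [Hw1 Hw2]]. specialize (HB0 w Hw1 Hw2).
    assert (0 <= Rint gp w x1); [|lra]. apply (Rint_ge0 a b); auto; [apply gp_cont|lra|intros; apply gp_nonneg, (I_between a b w x1); auto; lra]. }
  destruct (lim_at_a G al (G x1 - B) Ha) as [ga [Hga1 Hga2]].
  - intros y z Hy Hz Hyz. apply G_mono; auto.
  - intros w Hw1 Hw2. destruct (Rlt_dec w x1).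
    + pose proof (G_diff w x1 Hw2 Hx1). pose proof (HB0 w r Hw2). lra.
    + pose proof (G_mono x1 w Hx1 Hw2 ltac:(lra)). lra.
  - exists ga; split; auto.
Qed.


Lemma entr_fin : entrance_b b mu sigma x0 -> exists be, b = Fin be.
Proof.
  intros Hen. assert (Hc : (exists be, b = Fin be) \/ b = PInf \/ b = MInf) by (destruct b; eauto).
  destruct Hc as [H|[Eb|Eb]]; auto.
  - exfalso. destruct HA as [_ [_ [_ [_ [_ H6]]]]]. destruct (H6 Eb) as [_ HN].
    destruct Hen as [_ [r Hr]]. rewrite Hr in HN. discriminate.
  - exfalso. pose proof Hab as H. rewrite Eb in H. destruct a; simpl in H; auto.
Qed.

Lemma is_derive_val (f : R -> R) x l l' : is_derive f x l -> l = l' -> is_derive f x l'.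
Proof. intros H ->; exact H. Qed.

Definition Tf u := Mb + Rint m u x0.
Definition Sf u := Rint s x0 u.
Definition nu u := Sf u * m u.
Definition Ts u := Tf u * s u.

Lemma Tf_cont : contI a b Tf.
Proof. intros x Hx. unfold Tf. apply cpt_plus; [apply cpt_const|apply (Rint_cont_l a b); auto; [apply m_cont|apply Hx0]]. Qed.
Lemma Sf_cont : contI a b Sf.
Proof. intros x Hx. unfold Sf. apply (Rint_cont a b); auto; [apply s_cont|apply Hx0]. Qed.
Lemma nu_cont : contI a b nu.
Proof. intros x Hx. unfold nu. apply cpt_mult; [apply Sf_cont; auto|apply m_cont; auto]. Qed.
Lemma Ts_cont : contI a b Ts.
Proof. intros x Hx. unfold Ts. apply cpt_mult; [apply Tf_cont; auto|apply s_cont; auto]. Qed.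

Lemma parts w : I w -> Rint Ts x0 w = Tf w * Sf w + Rint nu x0 w.
Proof.
  intros Hw.
  set (Phi := fun t => Rint Ts x0 t - Tf t * Sf t - Rint nu x0 t).
  assert (Hd : forall x, I x -> is_derive Phi x 0).
  { intros x Hx.
    assert (H1 := Rint_deriv a b Ts x0 x Ts_cont Hx0 Hx).
    assert (H2 : is_derive Tf x (0 + - m x)).
    { exact (is_derive_plus _ _ _ _ _ (is_derive_const Mb x) (Rint_deriv_l a b m x0 x m_cont Hx0 Hx)). }
    assert (H3 := Rint_deriv a b s x0 x s_cont Hx0 Hx).
    assert (H5 := Rint_deriv a b nu x0 x nu_cont Hx0 Hx).
    assert (H4 := is_derive_mult _ _ _ _ _ H2 H3 Rmult_comm).
    assert (H6 := is_derive_minus _ _ _ _ _ (is_derive_minus _ _ _ _ _ H1 H4) H5).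
    apply (is_derive_val _ _ _ _ H6). unfold Ts, nu, Sf. simpl.
    unfold minus, plus, mult, opp; simpl. unfold Sf in *. ring. }
  destruct (MVT_gen Phi x0 w (fun _ => 0)) as [c [Hc HPhi]].
  - intros x Hx. apply Hd. destruct (Rle_dec x0 w).
    + rewrite Rmin_left, Rmax_right in Hx by lra. apply (I_between a b x0 w); auto; [apply Hx0|lra].
    + rewrite Rmin_right, Rmax_left in Hx by lra. apply (I_between a b w x0); auto; [apply Hx0|lra].
  - intros x Hx. apply (deriv_cont _ _ 0), Hd. destruct (Rle_dec x0 w).
    + rewrite Rmin_left, Rmax_right in Hx by lra. apply (I_between a b x0 w); auto; try apply Hx0; lra.
    + rewrite Rmin_right, Rmax_left in Hx by lra. apply (I_between a b w x0); auto; try apply Hx0; lra.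
  - unfold Phi in HPhi. unfold Sf in HPhi.
    pose proof (Rint_refl a b Ts x0 Ts_cont Hx0). pose proof (Rint_refl a b s x0 s_cont Hx0).
    pose proof (Rint_refl a b nu x0 nu_cont Hx0).
    rewrite H, H0, H1 in HPhi. unfold Sf. lra.
Qed.


Lemma Z_le_NB N : NB b mu sigma x0 = Fin N -> forall w, x0 < w -> I w -> Z w <= 2 * N.
Proof.
  intros HN w Hxw Hw.
  assert (HS0 : Sfun mu sigma x0 x0 = 0) by (apply (Rint_refl a b); [apply s_cont|apply Hx0]).
  assert (Hfe : (fun u => (Sfun mu sigma x0 u - Sfun mu sigma x0 x0) * m u) = nu).
  { apply functional_extensionality; intro u. rewrite HS0. unfold nu, Sf, Sfun. ring. }
  unfold NB in HN. rewrite Hfe in HN.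
  assert (Hnu : forall t, x0 < t -> I t -> 0 <= nu t).
  { intros t Ht HtI. unfold nu, Sf. apply Rmult_le_pos; [|left; apply m_pos; auto].
    apply (Rint_ge0 a b); auto; [apply s_cont|apply Hx0|lra|intros; left; apply s_pos]. }
  destruct (Itb_fin_sup a b nu x0 N nu_cont Hx0 Hnu HN) as [HN1 _].
  assert (HSw : 0 < Sf w) by (apply (Rint_gt0 a b); auto; [apply s_cont|apply Hx0|intros; apply s_pos]).
  destruct (Itb_fin_sup a b m w (Tf w) m_cont Hw (fun t _ Ht => Rlt_le _ _ (m_pos t Ht)) (Tm_u w Hw)) as [_ HT2].
  assert (Hkey : Tf w * Sf w + Rint nu x0 w <= N).
  { apply Rnot_lt_le; intro Hlt.
    set (e := (Tf w * Sf w + Rint nu x0 w - N) / Sf w).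
    assert (He : 0 < e) by (unfold e; apply Rdiv_lt_0_compat; lra).
    destruct (HT2 e He) as [z [[Hz1 Hz2] Hz3]].
    assert (H1 : Sf w * Rint m w z <= Rint nu w z).
    { rewrite <- (Rint_scal a b m); auto; [|apply m_cont].
      apply (Rint_le a b); auto; try lra; [intros x Hx; apply cpt_mult; [apply cpt_const|apply m_cont; auto]|apply nu_cont|].
      intros t Ht. assert (HtI : I t) by (apply (I_between a b w z); auto; lra).
      unfold nu. apply Rmult_le_compat_r; [left; apply m_pos; auto|].
      unfold Sf. rewrite <- (Rint_chasles a b s x0 w t); auto; [|apply s_cont|apply Hx0].
      assert (0 <= Rint s w t) by (apply (Rint_ge0 a b); auto; [apply s_cont|lra|intros; left; apply s_pos]). lra. }
    assert (H2 : Sf w * (Tf w - e) < Sf w * Rint m w z) by (apply Rmult_lt_compat_l; auto).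
    assert (H3 : Sf w * e = Tf w * Sf w + Rint nu x0 w - N) by (unfold e; field; lra).
    specialize (HN1 z (conj (Rlt_trans _ _ _ Hxw Hz1) Hz2)).
    rewrite <- (Rint_chasles a b nu x0 w z) in HN1; auto; [|apply nu_cont|apply Hx0].
    nra. }
  rewrite Z_I; auto.
  replace zp with (fun u => 2 * Ts u) by (apply functional_extensionality; intro u; unfold zp, Ts, Tf; ring).
  rewrite (Rint_scal a b Ts); auto; [|apply Ts_cont|apply Hx0].
  rewrite parts; auto. lra.
Qed.

Lemma ZE_b be : entrance_b b mu sigma x0 -> b = Fin be ->
  exists zb, ZEf be = Fin zb /\ forall w, I w -> Z w < zb.
Proof.
  intros Hen Hb. destruct Hen as [_ [N HN]].
  destruct (lim_at_b Z be (2 * N) Hb) as [zb [Hzb1 Hzb2]].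
  - intros y z Hy Hz Hyz. destruct (Req_dec y z) as [->|Hne]; [lra|]. left; apply Z_strict; auto; lra.
  - intros w Hw1 Hw2. apply Z_le_NB; auto.
  - exists zb. split; [unfold zetaE; exact Hzb1|].
    intros w Hw. destruct (I_above a b w Hw) as [w' [H1 H2]].
    pose proof (Hzb2 w' H2). pose proof (Z_strict w w' Hw H2 H1). lra.
Qed.

Lemma Tc_le_Tm u C : I u -> (forall t, u < t -> I t -> c0 t <= C) ->
  Cb + Rint c2m u x0 <= 2 * C * Tf u.
Proof.
  intros Hu HC.
  pose proof (Itb_fin_sup a b c2m u _ c2m_cont Hu (fun t _ Ht => c2m_nonneg t Ht) (Tc_u u Hu)) as Hs1.
  pose proof (Itb_fin_sup a b m u _ m_cont Hu (fun t _ Ht => Rlt_le _ _ (m_pos t Ht)) (Tm_u u Hu)) as [Hs2 _].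
  apply (supP_le _ _ _ _ Hs1). intros z [Hz1 Hz2].
  assert (HC0 : 0 <= C).
  { destruct (I_above a b u Hu) as [t [Ht1 Ht2]]. pose proof (HC t Ht1 Ht2). pose proof (c0_nonneg t (IE t Ht2)). lra. }
  assert (Rint c2m u z <= 2 * C * Rint m u z).
  { rewrite <- (Rint_scal a b m); auto; [|apply m_cont].
    apply (Rint_le a b); auto; try lra; [apply c2m_cont|intros x Hx; apply cpt_mult; [apply cpt_const|apply m_cont; auto]|].
    intros t Ht. assert (HtI : I t) by (apply (I_between a b u z); auto; lra).
    unfold c2m. pose proof (HC t ltac:(lra) HtI). pose proof (m_pos t HtI). pose proof (c0_nonneg t (IE t HtI)). nra. }
  specialize (Hs2 z (conj Hz1 Hz2)). unfold Tf.
  assert (2 * C * Rint m u z <= 2 * C * (Mb + Rint m u x0)) by (apply Rmult_le_compat_l; lra). lra.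
Qed.

Lemma GE_b be : entrance_b b mu sigma x0 -> b = Fin be ->
  exists gb, GEf be = Fin gb /\ forall w, I w -> G w <= gb.
Proof.
  intros Hen Hb. pose proof Hen as Hen'. destruct Hen' as [_ [N HN]].
  assert (HbE : E be) by (right; right; split; auto).
  destruct (c0_bound_at be HbE) as [d [Hd Hc0]].
  pose proof (Rmax_l (be - d / 2) x0); pose proof (Rmax_r (be - d / 2) x0).
  assert (Hx0b : x0 < be) by (destruct Hx0 as [_ H']; rewrite Hb in H'; exact H').
  assert (Hx1b : Rmax (be - d / 2) x0 < be) by (apply Rmax_lub_lt; lra).
  set (x1 := Rmax (be - d / 2) x0) in *.
  assert (Hx1 : I x1).
  { split; [|rewrite Hb; simpl; lra]. destruct Hx0 as [H' _]. destruct a; simpl in *; auto; lra. }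
  set (C := c0 be + 1).
  assert (Hgp : forall u, x1 < u -> I u -> gp u <= C * zp u).
  { intros u Hu1 Hu2. unfold gp, zp.
    assert (Cb + Rint c2m u x0 <= 2 * C * Tf u).
    { apply Tc_le_Tm; auto. intros t Ht HtI. unfold C.
      assert (t < be) by (destruct HtI as [_ H']; rewrite Hb in H'; exact H').
      left. apply Hc0; [|apply IE; auto]. rewrite Rabs_left; lra. }
    unfold Tf in H1. pose proof (s_pos u).
    assert ((Cb + Rint c2m u x0) * s u <= 2 * C * (Mb + Rint m u x0) * s u) by (apply Rmult_le_compat_r; lra).
    lra. }
  assert (HC : 0 < C) by (pose proof (c0_nonneg be HbE); unfold C; lra).
  destruct (lim_at_b G be (G x1 + C * Rabs (2 * N - Z x1)) Hb) as [gb [Hgb1 Hgb2]].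
  - intros y z Hy Hz Hyz. apply G_mono; auto.
  - intros w Hw1 Hw2. pose proof (Rle_abs (2 * N - Z x1)). pose proof (Rabs_pos (2 * N - Z x1)).
    assert (C * (2 * N - Z x1) <= C * Rabs (2 * N - Z x1)) by (apply Rmult_le_compat_l; lra).
    assert (0 <= C * Rabs (2 * N - Z x1)) by (apply Rmult_le_pos; lra).
    destruct (Rlt_dec x1 w).
    + pose proof (G_diff x1 w Hx1 Hw2).
      assert (HRg : Rint gp x1 w <= C * Rint zp x1 w).
      { rewrite <- (Rint_scal a b zp); auto; [|apply zp_cont].
        apply (Rint_le a b); auto; try lra; [apply gp_cont|intros x Hx; apply cpt_mult; [apply cpt_const|apply zp_cont; auto]|].
        intros t Ht. apply Hgp; [lra|]. apply (I_between a b x1 w); auto; lra. }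
      pose proof (Z_diff x1 w Hx1 Hw2) as HZd. pose proof (Z_le_NB N HN w Hw1 Hw2).
      rewrite <- HZd in HRg.
      assert (C * (Z w - Z x1) <= C * (2 * N - Z x1)) by (apply Rmult_le_compat_l; lra). lra.
    + pose proof (G_mono w x1 Hw2 Hx1 ltac:(lra)). lra.
  - exists gb; split; auto.
Qed.


Lemma nat_not_att : natural_a a mu sigma x0 -> ~ attainable_a a mu sigma x0.
Proof. intros [H _] [[[r Hr] _]|[[r Hr] _]]; rewrite H in Hr; discriminate. Qed.
Lemma nat_not_ent : natural_b b mu sigma x0 -> ~ entrance_b b mu sigma x0.
Proof. intros [_ H] [_ [r Hr]]. rewrite H in Hr; discriminate. Qed.

Lemma E_bounds x : E x -> Rbar_le a (Fin x) /\ Rbar_le (Fin x) b.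
Proof.
  pose proof Hab as Hab'.
  intros [[H1 H2]|[[H _]|[H _]]]; [split; apply Rbar_lt_le; auto| |]; rewrite <- H in *; split.
  - apply Rbar_le_refl.
  - apply Rbar_lt_le; auto.
  - apply Rbar_lt_le; auto.
  - apply Rbar_le_refl.
Qed.

Definition ZEr x := Rbar_real (ZEf x).
Definition GEr x := Rbar_real (GEf x).

Lemma E_vals x : E x -> ZEf x = Fin (ZEr x) /\ GEf x = Fin (GEr x).
Proof.
  intros [Hx|[[Ha Hat]|[Hb Hen]]]; unfold ZEr, GEr.
  - rewrite ZE_I, GE_I; auto.
  - destruct (ZE_a x Hat (eq_sym Ha)) as [za [H1 _]]. destruct (GE_a x Hat (eq_sym Ha)) as [ga [H2 _]].
    rewrite H1, H2; auto.
  - destruct (ZE_b x Hen (eq_sym Hb)) as [zb [H1 _]]. destruct (GE_b x Hen (eq_sym Hb)) as [gb [H2 _]].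
    rewrite H1, H2; auto.
Qed.

Lemma E_I x : I x -> ZEr x = Z x /\ GEr x = G x.
Proof. intros Hx. unfold ZEr, GEr. rewrite ZE_I, GE_I; auto. Qed.

Lemma E_mono x y : E x -> E y -> x < y -> ZEr x < ZEr y /\ GEr x <= GEr y.
Proof.
  intros Hx Hy Hxy.
  pose proof (E_bounds x Hx) as [Bx1 Bx2]. pose proof (E_bounds y Hy) as [By1 By2].
  destruct Hx as [HxI|[[Ha Hat]|[Hb Hen]]].
  - destruct Hy as [HyI|[[Ha Hat]|[Hb Hen]]].
    + destruct (E_I x HxI) as [-> ->]. destruct (E_I y HyI) as [-> ->].
      split; [apply Z_strict|apply G_mono]; auto; lra.
    + exfalso. destruct HxI as [H _]. rewrite <- Ha in H. simpl in H. lra.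
    + destruct (E_I x HxI) as [-> ->]. unfold ZEr, GEr.
      destruct (ZE_b y Hen (eq_sym Hb)) as [zb [H1 H1']]. destruct (GE_b y Hen (eq_sym Hb)) as [gb [H2 H2']].
      rewrite H1, H2. simpl. auto.
  - destruct Hy as [HyI|[[Ha' _]|[Hb Hen]]].
    + destruct (E_I y HyI) as [-> ->]. unfold ZEr, GEr.
      destruct (ZE_a x Hat (eq_sym Ha)) as [za [H1 H1']]. destruct (GE_a x Hat (eq_sym Ha)) as [ga [H2 H2']].
      rewrite H1, H2. simpl. auto.
    + exfalso. rewrite <- Ha in Ha'. injection Ha' as ->. lra.
    + unfold ZEr, GEr.
      destruct (ZE_a x Hat (eq_sym Ha)) as [za [H1 H1']]. destruct (GE_a x Hat (eq_sym Ha)) as [ga [H2 H2']].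
      destruct (ZE_b y Hen (eq_sym Hb)) as [zb [H3 H3']]. destruct (GE_b y Hen (eq_sym Hb)) as [gb [H4 H4']].
      rewrite H1, H2, H3, H4. simpl.
      pose proof (H1' x0 Hx0). pose proof (H2' x0 Hx0). pose proof (H3' x0 Hx0). pose proof (H4' x0 Hx0). lra.
  - exfalso. rewrite <- Hb in By2. simpl in By2. lra.
Qed.


Notation F := (F0 a b mu sigma x0 c0 c1).

Lemma k1_ex : exists k1, 0 < k1 /\ forall y z, E y -> E z -> y <= z -> Rbar_le (Fin k1) (c1 y z).
Proof. destruct HB as [_ [_ [_ [_ [_ [_ [_ [_ [_ [H _]]]]]]]]]]. exact H. Qed.

Lemma F0_fin y z c : E y -> E z -> y < z -> c1 y z = Fin c ->
  F y z = Fin ((c + GEr z + - GEr y) / (ZEr z + - ZEr y)).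
Proof.
  intros Hy Hz Hyz Hc. unfold F0. destruct (Rlt_dec y z); [|lra].
  destruct (E_vals y Hy) as [H1 H2]. destruct (E_vals z Hz) as [H3 H4].
  rewrite Hc, H1, H2, H3, H4. reflexivity.
Qed.

Lemma F0_inf y z : E y -> E z -> y < z -> c1 y z = PInf -> F y z = PInf.
Proof.
  intros Hy Hz Hyz Hc. unfold F0. destruct (Rlt_dec y z); [|lra].
  destruct (E_vals y Hy) as [H1 H2]. destruct (E_vals z Hz) as [H3 H4].
  rewrite Hc, H1, H2, H3, H4. simpl. destruct (E_mono y z Hy Hz Hyz) as [Hm _].
  destruct (Rlt_dec 0 (ZEr z + - ZEr y)); [reflexivity|lra].
Qed.

Lemma F0_pos y z : E y -> E z -> y < z ->
  (F y z = PInf) \/ (exists v, F y z = Fin v /\ 0 < v).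
Proof.
  intros Hy Hz Hyz. destruct k1_ex as [k1 [Hk1 Hk]]. pose proof (Hk y z Hy Hz ltac:(lra)) as Hc.
  destruct (c1 y z) as [c| |] eqn:Ec; simpl in Hc; [|left; apply F0_inf; auto|contradiction].
  right. exists ((c + GEr z + - GEr y) / (ZEr z + - ZEr y)). split; [apply F0_fin; auto|].
  destruct (E_mono y z Hy Hz Hyz) as [H1 H2]. apply Rdiv_lt_0_compat; lra.
Qed.

Lemma nat_unb : natural_a a mu sigma x0 -> forall K, exists w, w < x0 /\ I w /\ K < Rint m w x0.
Proof.
  intros Hnat K. apply NNPP; intro Hn.
  assert (HK : forall w, w < x0 -> I w -> Rint m w x0 <= K).
  { intros w Hw1 Hw2. apply Rnot_lt_le; intro; apply Hn; exists w; auto. }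
  destruct Sa_ex as [Sa HSa].
  set (f := fun u => (Mfun mu sigma x0 x0 - Mfun mu sigma x0 u) * s u).
  assert (Hfe : forall t, I t -> f t = sig t).
  { intros t Ht. unfold f, sig, Mfun. rewrite (Rint_refl a b); [|apply m_cont|apply Hx0].
    rewrite (Rint_swap a b m x0 t); [ring|apply m_cont|apply Hx0|auto]. }
  assert (Hfc : contI a b f) by (apply (contI_ext a b f sig); auto; apply sig_cont).
  destruct (Ifa_cases a b f x0 Hfc Hx0) as [[L [HL _]]|[_ Hunb]].
  - intros t Ht1 Ht2. rewrite Hfe; auto. apply sig_nonneg; auto; lra.
  - destruct Hnat as [HSg _]. unfold SigmaA in HSg. fold f in HSg. rewrite HL in HSg. discriminate.
  - destruct (Hunb (Rmax K 0 * Sa)) as [y [Hy1 [Hy2 Hy3]]].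
    rewrite (Rint_ext_I a b f sig) in Hy3; auto; [|apply sig_cont|apply Hx0].
    assert (Rint sig y x0 <= Rint (fun u => Rmax K 0 * s u) y x0).
    { apply (Rint_le a b); auto; [apply sig_cont|intros x Hx; apply cpt_mult; [apply cpt_const|apply s_cont; auto]|apply Hx0|lra|].
      intros t Ht. assert (HtI : I t) by (apply (I_between a b y x0); auto; [apply Hx0|lra]).
      unfold sig. apply Rmult_le_compat_r; [left; apply s_pos|].
      pose proof (Rmax_l K 0). assert (Rint m t x0 <= K) by (apply HK; auto; lra). lra. }
    rewrite (Rint_scal a b s) in H; auto; [|apply s_cont|apply Hx0].
    pose proof (HSa y Hy1 Hy2). pose proof (Rmax_r K 0).
    assert (Rmax K 0 * Rint s y x0 <= Rmax K 0 * Sa) by (apply Rmult_le_compat_l; lra). lra.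
Qed.


Lemma ratio_gen u v ep : I u -> I v -> u <= v -> 0 <= ep ->
  (forall t, u < t < v -> gp t <= ep * zp t) -> G v - G u <= ep * (Z v - Z u).
Proof.
  intros Hu Hv Huv Hep H. rewrite G_diff, Z_diff; auto.
  rewrite <- (Rint_scal a b zp); auto; [|apply zp_cont].
  apply (Rint_le a b); auto; [apply gp_cont|intros x Hx; apply cpt_mult; [apply cpt_const|apply zp_cont; auto]].
Qed.

Lemma gp_le_of_T u ep : I u -> 0 <= ep -> Cb + Rint c2m u x0 <= 2 * ep * Tf u -> gp u <= ep * zp u.
Proof.
  intros Hu Hep H. unfold gp, zp. unfold Tf in H. pose proof (s_pos u).
  assert ((Cb + Rint c2m u x0) * s u <= 2 * ep * (Mb + Rint m u x0) * s u) by (apply Rmult_le_compat_r; lra). lra.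
Qed.

Lemma ratioA al : a = Fin al -> natural_a a mu sigma x0 ->
  filterlim (Rnbhd a) I (fun x => Fin (c0 x)) (Fin 0) ->
  forall ep, 0 < ep -> exists w1, I w1 /\ forall u v, I u -> I v -> u <= v -> v < w1 ->
    G v - G u <= ep * (Z v - Z u).
Proof.
  intros Ha Hnat Hc0 ep Hep.
  pose proof (filterlim_fin_inv _ _ c0 0 (Rnbhd_mono a) Hc0 (ep / 2) ltac:(lra)) as Hn.
  rewrite Ha in Hn at 1. destruct Hn as [d [Hd Hc]].
  pose proof (Rmin_l (al + d / 2) x0); pose proof (Rmin_r (al + d / 2) x0).
  assert (Halx0 : al < x0) by (destruct Hx0 as [H' _]; rewrite Ha in H'; exact H').
  assert (Hx1a : al < Rmin (al + d / 2) x0) by (apply Rmin_glb_lt; lra).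
  set (x1 := Rmin (al + d / 2) x0) in *.
  assert (Hx1 : I x1).
  { split; [rewrite Ha; simpl; lra|]. destruct Hx0 as [_ H']. destruct b; simpl in *; auto; lra. }
  set (K1 := Rint c2m x1 x0).
  assert (HK1 : 0 <= K1).
  { apply (Rint_ge0 a b); auto; [apply c2m_cont|apply Hx0|intros; apply c2m_nonneg, (I_between a b x1 x0); auto; [apply Hx0|lra]]. }
  pose proof Cb_nonneg. pose proof Mb_pos.
  destruct (nat_unb Hnat ((Cb + K1) / ep)) as [w1' [Hw1 [Hw2 Hw3]]].
  pose proof (Rmin_l w1' x1); pose proof (Rmin_r w1' x1).
  assert (Hw1I : I (Rmin w1' x1)) by (destruct (Rle_dec w1' x1); [rewrite Rmin_left|rewrite Rmin_right]; auto; lra).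
  exists (Rmin w1' x1). split; auto.
  intros u v Hu Hv Huv Hvw. apply ratio_gen; auto; [lra|].
  intros t Ht. assert (HtI : I t) by (apply (I_between a b u v); auto; lra).
  apply gp_le_of_T; auto; [lra|].
  assert (Hc2 : Rint c2m t x0 = Rint c2m t x1 + K1).
  { unfold K1. rewrite (Rint_chasles a b c2m t x1 x0); auto; [apply c2m_cont|apply Hx0]. }
  assert (Hm1 : Rint c2m t x1 <= ep * Rint m t x1).
  { rewrite <- (Rint_scal a b m); auto; [|apply m_cont].
    apply (Rint_le a b); auto; try lra; [apply c2m_cont| |].
    - intros x Hx. apply cpt_mult; [apply cpt_const|apply m_cont; auto].
    - intros r Hr. assert (HrI : I r) by (apply (I_between a b t x1); auto; lra).
      assert (al < r) by (destruct HrI as [H' _]; rewrite Ha in H'; exact H').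
      assert (Hcr : Rabs (c0 r - 0) < ep / 2) by (apply Hc; [rewrite Rabs_right; lra|exact HrI]).
      rewrite Rminus_0_r in Hcr. pose proof (Rle_abs (c0 r)).
      unfold c2m. pose proof (m_pos r HrI). pose proof (c0_nonneg r (IE r HrI)). nra. }
  assert (Hm2 : Rint m t x1 <= Rint m t x0).
  { apply (Rint_mono_up m t x1 x0); [apply m_cont|intros; left; apply m_pos; auto|exact HtI|exact Hx1|apply Hx0|lra|lra]. }
  assert (Hm3 : Rint m w1' x0 <= Rint m t x0).
  { apply (Rint_mono_low m t w1' x0); [apply m_cont|intros; left; apply m_pos; auto|exact HtI|exact Hw2|apply Hx0|lra|lra]. }
  assert (Hm4 : Cb + K1 <= ep * Rint m w1' x0).
  { apply (Rmult_lt_compat_l ep) in Hw3; auto. unfold Rdiv in Hw3.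
    replace (ep * ((Cb + K1) * / ep)) with (Cb + K1) in Hw3 by (field; lra). lra. }
  assert (ep * Rint m w1' x0 <= ep * Rint m t x0) by (apply Rmult_le_compat_l; lra).
  assert (ep * Rint m t x1 <= ep * Rint m t x0) by (apply Rmult_le_compat_l; lra).
  unfold Tf. rewrite Hc2. nra.
Qed.

Lemma ratioB be : b = Fin be -> natural_b b mu sigma x0 ->
  filterlim (Rnbhd b) I (fun x => Fin (c0 x)) (Fin 0) ->
  forall ep, 0 < ep -> exists w1, I w1 /\ forall u v, I u -> I v -> u <= v -> w1 < u ->
    G v - G u <= ep * (Z v - Z u).
Proof.
  intros Hb Hnat Hc0 ep Hep.
  pose proof (filterlim_fin_inv _ _ c0 0 (Rnbhd_mono b) Hc0 (ep / 2) ltac:(lra)) as Hn.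
  rewrite Hb in Hn at 1. destruct Hn as [d [Hd Hc]].
  pose proof (Rmax_l (be - d / 2) x0); pose proof (Rmax_r (be - d / 2) x0).
  assert (Hx0b : x0 < be) by (destruct Hx0 as [_ H']; rewrite Hb in H'; exact H').
  assert (Hx1b : Rmax (be - d / 2) x0 < be) by (apply Rmax_lub_lt; lra).
  set (x1 := Rmax (be - d / 2) x0) in *.
  assert (Hx1 : I x1).
  { split; [|rewrite Hb; simpl; lra]. destruct Hx0 as [H' _]. destruct a; simpl in *; auto; lra. }
  exists x1. split; auto.
  intros u v Hu Hv Huv Hxu. apply ratio_gen; auto; [lra|].
  intros t Ht. assert (HtI : I t) by (apply (I_between a b u v); auto; lra).
  apply (gp_le_of_T t ep HtI ltac:(lra)).
  assert (HT : Cb + Rint c2m t x0 <= 2 * (ep / 2) * Tf t).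
  { apply (Tc_le_Tm t (ep / 2) HtI). intros r Hr HrI.
    assert (r < be) by (destruct HrI as [_ H']; rewrite Hb in H'; exact H').
    assert (Hcr : Rabs (c0 r - 0) < ep / 2) by (apply Hc; [rewrite Rabs_left; lra|exact HrI]).
    rewrite Rminus_0_r in Hcr. pose proof (Rle_abs (c0 r)). lra. }
  pose proof (Tm_pos t HtI). unfold Tf in *. nra.
Qed.


Lemma E_near_a al x : a = Fin al -> natural_a a mu sigma x0 -> E x -> x < x0 -> I x.
Proof.
  intros Ha Hnat [Hx|[[Ha' Hat]|[Hb Hen]]] Hxx0; auto.
  - exfalso. exact (nat_not_att Hnat Hat).
  - exfalso. destruct Hx0 as [_ H']. rewrite <- Hb in H'. simpl in H'. lra.
Qed.

Lemma E_near_b be x : b = Fin be -> natural_b b mu sigma x0 -> E x -> x0 < x -> I x.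
Proof.
  intros Hb Hnat [Hx|[[Ha Hat]|[Hb' Hen]]] Hxx0; auto.
  - exfalso. destruct Hx0 as [H' _]. rewrite <- Ha in H'. simpl in H'. lra.
  - exfalso. exact (nat_not_ent Hnat Hen).
Qed.

Lemma E_gt_a al x : a = Fin al -> natural_a a mu sigma x0 -> E x -> al < x.
Proof.
  intros Ha Hnat Hx. destruct (Rlt_dec x x0).
  - pose proof (E_near_a al x Ha Hnat Hx r) as [H _]. rewrite Ha in H. exact H.
  - destruct Hx0 as [H _]. rewrite Ha in H. simpl in H. lra.
Qed.

Lemma E_lt_b be x : b = Fin be -> natural_b b mu sigma x0 -> E x -> x < be.
Proof.
  intros Hb Hnat Hx. destruct (Rlt_dec x0 x).
  - pose proof (E_near_b be x Hb Hnat Hx r) as [_ H]. rewrite Hb in H. exact H.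
  - destruct Hx0 as [_ H]. rewrite Hb in H. simpl in H. lra.
Qed.

Definition Goal_eps := forall ep, 0 < ep -> exists y z, E y /\ E z /\ y < z /\ exists v, F y z = Fin v /\ v < ep.

Lemma eta_choice k1 K ep : 0 < k1 -> 0 < ep -> exists eta, 0 < eta /\ eta <= ep / 2 /\ eta * (Rabs K + 1) <= k1.
Proof.
  intros Hk He. pose proof (Rabs_pos K).
  exists (Rmin (ep / 2) (k1 / (Rabs K + 1))). split; [apply Rmin_pos; [lra|apply Rdiv_lt_0_compat; lra]|].
  split; [apply Rmin_l|].
  assert (Rmin (ep / 2) (k1 / (Rabs K + 1)) * (Rabs K + 1) <= k1 / (Rabs K + 1) * (Rabs K + 1))
    by (apply Rmult_le_compat_r; [lra|apply Rmin_r]).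
  replace (k1 / (Rabs K + 1) * (Rabs K + 1)) with k1 in H0 by (field; lra). exact H0.
Qed.

Lemma keyA al z : a = Fin al -> natural_a a mu sigma x0 -> E z ->
  Rbar_liminf (Rnbhd a) (fun y => E y /\ y < z)
    (fun y => Rbar_div (Rbar_minus (c1 y z) (GEf y)) (ZEf y)) = Fin 0 -> Goal_eps.
Proof.
  intros Ha Hnat Hz Hlim ep Hep. destruct k1_ex as [k1 [Hk1 Hk]].
  destruct (eta_choice k1 (2 * (GEr z - ep * ZEr z) / ep) ep Hk1 Hep) as [eta [He1 [He2 He3]]].
  destruct (liminf_lower _ _ _ Hlim eta He1) as [P [HP HPr]].
  rewrite Ha in HP. destruct HP as [d [Hd HPd]].
  pose proof (E_gt_a al z Ha Hnat Hz) as Halz.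
  assert (Halx0 : al < x0) by (destruct Hx0 as [H' _]; rewrite Ha in H'; exact H').
  assert (Hq : 0 < Rmin (Rmin d (x0 - al)) (z - al)) by (apply Rmin_pos; [apply Rmin_pos|]; lra).
  pose proof (Rmin_l (Rmin d (x0 - al)) (z - al)); pose proof (Rmin_r (Rmin d (x0 - al)) (z - al)).
  pose proof (Rmin_l d (x0 - al)); pose proof (Rmin_r d (x0 - al)).
  set (q := Rmin (Rmin d (x0 - al)) (z - al)) in *.
  set (y := al + q / 2).
  assert (Hyz : y < z) by (unfold y; lra).
  assert (Hyx0 : y < x0) by (unfold y; lra).
  assert (HyI : I y).
  { split; [rewrite Ha; simpl; unfold y; lra|]. destruct Hx0 as [_ H'].
    apply (Rbar_lt_le_trans _ (Fin x0)); [simpl; lra|apply Rbar_lt_le; exact H']. }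
  specialize (HPr y (HPd y ltac:(unfold y; rewrite Rabs_right; lra)) (conj (IE y HyI) Hyz)).
  exists y, z. split; [apply IE; auto|]. split; auto. split; auto.
  rewrite ZE_I, GE_I in HPr; auto.
  pose proof (Z_strict y x0 HyI Hx0 Hyx0) as HZy. rewrite Z_x0 in HZy.
  pose proof (G_mono y x0 HyI Hx0 ltac:(lra)) as HGy. rewrite G_x0 in HGy.
  pose proof (Hk y z (IE y HyI) Hz ltac:(lra)) as Hc.
  destruct (c1 y z) as [c| |] eqn:Ec.
  - exists ((c + GEr z + - GEr y) / (ZEr z + - ZEr y)). split; [apply F0_fin; auto; apply IE; auto|].
    destruct (E_I y HyI) as [HZ HG]. rewrite HZ, HG.
    destruct (E_mono y z (IE y HyI) Hz Hyz) as [Hm _]. rewrite HZ in Hm.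
    apply (arith_a c (G y) (Z y) (GEr z) (ZEr z) k1 ep eta); auto.
  - exfalso. simpl in HPr. destruct (Rlt_dec 0 (Z y)); [lra|]. destruct (Rlt_dec (Z y) 0); [simpl in HPr; auto|lra].
  - simpl in Hc. contradiction.
Qed.


Lemma keyB be y : b = Fin be -> natural_b b mu sigma x0 -> E y ->
  Rbar_liminf (Rnbhd b) (fun z => E z /\ y < z)
    (fun z => Rbar_div (Rbar_plus (c1 y z) (GEf z)) (ZEf z)) = Fin 0 -> Goal_eps.
Proof.
  intros Hb Hnat Hy Hlim ep Hep. destruct k1_ex as [k1 [Hk1 Hk]].
  destruct (eta_choice k1 (2 * (ep * ZEr y - GEr y) / ep) ep Hk1 Hep) as [eta [He1 [He2 He3]]].
  pose proof (E_lt_b be y Hb Hnat Hy) as Hyb.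
  assert (Hx0b : x0 < be) by (destruct Hx0 as [_ H']; rewrite Hb in H'; exact H').
  assert (Hd : 0 < Rmin (be - x0) (be - y)) by (apply Rmin_pos; lra).
  pose proof (Rmin_l (be - x0) (be - y)); pose proof (Rmin_r (be - x0) (be - y)).
  set (d := Rmin (be - x0) (be - y)) in *.
  assert (HP : Rnbhd b (fun t => Rabs (t - be) < d)) by (rewrite Hb; exists d; split; auto).
  destruct (liminf_upper _ _ _ Hlim eta He1 _ HP) as [t [Pt [[Et Hyt] Hr]]].
  assert (Hxt : x0 < t) by (unfold Rabs in Pt; destruct (Rcase_abs (t - be)); lra).
  pose proof (E_near_b be t Hb Hnat Et Hxt) as HtI.
  exists y, t. split; auto. split; auto. split; auto.
  rewrite ZE_I, GE_I in Hr; auto.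
  pose proof (Z_strict x0 t Hx0 HtI Hxt) as HZt. rewrite Z_x0 in HZt.
  pose proof (G_mono x0 t Hx0 HtI ltac:(lra)) as HGt. rewrite G_x0 in HGt.
  pose proof (Hk y t Hy Et ltac:(lra)) as Hc.
  destruct (c1 y t) as [c| |] eqn:Ec.
  - exists ((c + GEr t + - GEr y) / (ZEr t + - ZEr y)). split; [apply F0_fin; auto|].
    destruct (E_I t HtI) as [HZ HG]. rewrite HZ, HG.
    destruct (E_mono y t Hy Et Hyt) as [Hm _]. rewrite HZ in Hm.
    apply (arith_b c (GEr y) (ZEr y) (G t) (Z t) k1 ep eta); auto.
  - exfalso. simpl in Hr. destruct (Rlt_dec 0 (Z t)); [simpl in Hr; auto|lra].
  - simpl in Hc. contradiction.
Qed.

Lemma keyC al : a = Fin al -> natural_a a mu sigma x0 ->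
  filterlim (Rnbhd a) I (fun x => Fin (c0 x)) (Fin 0) ->
  Rbar_liminf (Rnbhd2 al al) (fun p => E (fst p) /\ E (snd p) /\ fst p < snd p)
    (fun p => Rbar_div (c1 (fst p) (snd p)) (Rbar_minus (ZEf (snd p)) (ZEf (fst p)))) = Fin 0 ->
  Goal_eps.
Proof.
  intros Ha Hnat Hc0 Hlim ep Hep. destruct k1_ex as [k1 [Hk1 Hk]].
  destruct (ratioA al Ha Hnat Hc0 (ep / 2) ltac:(lra)) as [w1 [Hw1 Hrat]].
  assert (Halw : al < w1) by (destruct Hw1 as [H' _]; rewrite Ha in H'; exact H').
  assert (Halx0 : al < x0) by (destruct Hx0 as [H' _]; rewrite Ha in H'; exact H').
  assert (Hd : 0 < Rmin (w1 - al) (x0 - al)) by (apply Rmin_pos; lra).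
  pose proof (Rmin_l (w1 - al) (x0 - al)); pose proof (Rmin_r (w1 - al) (x0 - al)).
  set (d := Rmin (w1 - al) (x0 - al)) in *.
  assert (HP : Rnbhd2 al al (fun p => Rabs (fst p - al) < d /\ Rabs (snd p - al) < d)) by (exists d; split; auto).
  destruct (liminf_upper _ _ _ Hlim (ep / 2) ltac:(lra) _ HP) as [[u v] [[Pu Pv] [[Eu [Ev Huv]] Hr]]].
  simpl in *.
  assert (Hux0 : u < x0) by (unfold Rabs in Pu; destruct (Rcase_abs (u - al)); lra).
  assert (Hvx0 : v < x0) by (unfold Rabs in Pv; destruct (Rcase_abs (v - al)); lra).
  assert (Hvw : v < w1) by (unfold Rabs in Pv; destruct (Rcase_abs (v - al)); lra).
  pose proof (E_near_a al u Ha Hnat Eu Hux0) as HuI. pose proof (E_near_a al v Ha Hnat Ev Hvx0) as HvI.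
  exists u, v. split; auto. split; auto. split; auto.
  rewrite !ZE_I in Hr; auto.
  pose proof (Z_strict u v HuI HvI Huv) as HZ.
  pose proof (Hrat u v HuI HvI ltac:(lra) Hvw) as HG.
  pose proof (Hk u v Eu Ev ltac:(lra)) as Hc.
  destruct (c1 u v) as [c| |] eqn:Ec.
  - exists ((c + GEr v + - GEr u) / (ZEr v + - ZEr u)). split; [apply F0_fin; auto|].
    destruct (E_I u HuI) as [-> ->]. destruct (E_I v HvI) as [-> ->].
    simpl in Hr. replace (c + G v + - G u) with (c + (G v - G u)) by ring.
    replace ep with (ep / 2 + ep / 2) by field.
    apply arith_c; [lra|exact Hr|]. unfold Rminus in HG. exact HG.
  - exfalso. simpl in Hr. destruct (Rlt_dec 0 (Z v + - Z u)); [simpl in Hr; auto|lra].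
  - simpl in Hc. contradiction.
Qed.

Lemma keyD be : b = Fin be -> natural_b b mu sigma x0 ->
  filterlim (Rnbhd b) I (fun x => Fin (c0 x)) (Fin 0) ->
  Rbar_liminf (Rnbhd2 be be) (fun p => E (fst p) /\ E (snd p) /\ fst p < snd p)
    (fun p => Rbar_div (c1 (fst p) (snd p)) (Rbar_minus (ZEf (snd p)) (ZEf (fst p)))) = Fin 0 ->
  Goal_eps.
Proof.
  intros Hb Hnat Hc0 Hlim ep Hep. destruct k1_ex as [k1 [Hk1 Hk]].
  destruct (ratioB be Hb Hnat Hc0 (ep / 2) ltac:(lra)) as [w1 [Hw1 Hrat]].
  assert (Hwb : w1 < be) by (destruct Hw1 as [_ H']; rewrite Hb in H'; exact H').
  assert (Hx0b : x0 < be) by (destruct Hx0 as [_ H']; rewrite Hb in H'; exact H').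
  assert (Hd : 0 < Rmin (be - w1) (be - x0)) by (apply Rmin_pos; lra).
  pose proof (Rmin_l (be - w1) (be - x0)); pose proof (Rmin_r (be - w1) (be - x0)).
  set (d := Rmin (be - w1) (be - x0)) in *.
  assert (HP : Rnbhd2 be be (fun p => Rabs (fst p - be) < d /\ Rabs (snd p - be) < d)) by (exists d; split; auto).
  destruct (liminf_upper _ _ _ Hlim (ep / 2) ltac:(lra) _ HP) as [[u v] [[Pu Pv] [[Eu [Ev Huv]] Hr]]].
  simpl in *.
  assert (Hux0 : x0 < u) by (unfold Rabs in Pu; destruct (Rcase_abs (u - be)); lra).
  assert (Hvx0 : x0 < v) by (unfold Rabs in Pv; destruct (Rcase_abs (v - be)); lra).
  assert (Huw : w1 < u) by (unfold Rabs in Pu; destruct (Rcase_abs (u - be)); lra).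
  pose proof (E_near_b be u Hb Hnat Eu Hux0) as HuI. pose proof (E_near_b be v Hb Hnat Ev Hvx0) as HvI.
  exists u, v. split; auto. split; auto. split; auto.
  rewrite !ZE_I in Hr; auto.
  pose proof (Z_strict u v HuI HvI Huv) as HZ.
  pose proof (Hrat u v HuI HvI ltac:(lra) Huw) as HG.
  pose proof (Hk u v Eu Ev ltac:(lra)) as Hc.
  destruct (c1 u v) as [c| |] eqn:Ec.
  - exists ((c + GEr v + - GEr u) / (ZEr v + - ZEr u)). split; [apply F0_fin; auto|].
    destruct (E_I u HuI) as [-> ->]. destruct (E_I v HvI) as [-> ->].
    simpl in Hr. replace (c + G v + - G u) with (c + (G v - G u)) by ring.
    replace ep with (ep / 2 + ep / 2) by field.
    apply arith_c; [lra|exact Hr|]. unfold Rminus in HG. exact HG.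
  - exfalso. simpl in Hr. destruct (Rlt_dec 0 (Z v + - Z u)); [simpl in Hr; auto|lra].
  - simpl in Hc. contradiction.
Qed.


Lemma main_sec :
  ( (exists al : R, a = Fin al /\ natural_a a mu sigma x0 /\
       exists z, E z /\
         Rbar_liminf (Rnbhd a) (fun y => E y /\ y < z)
           (fun y => Rbar_div (Rbar_minus (c1 y z) (GEf y)) (ZEf y)) = Fin 0)
    \/
    (exists be : R, b = Fin be /\ natural_b b mu sigma x0 /\
       exists y, E y /\
         Rbar_liminf (Rnbhd b) (fun z => E z /\ y < z)
           (fun z => Rbar_div (Rbar_plus (c1 y z) (GEf z)) (ZEf z)) = Fin 0)
    \/
    (exists al : R, a = Fin al /\ natural_a a mu sigma x0 /\
       filterlim (Rnbhd a) (inI a b) (fun x => Fin (c0 x)) (Fin 0) /\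
       Rbar_liminf (Rnbhd2 al al)
         (fun p => E (fst p) /\ E (snd p) /\ fst p < snd p)
         (fun p => Rbar_div (c1 (fst p) (snd p)) (Rbar_minus (ZEf (snd p)) (ZEf (fst p)))) = Fin 0)
    \/
    (exists be : R, b = Fin be /\ natural_b b mu sigma x0 /\
       filterlim (Rnbhd b) (inI a b) (fun x => Fin (c0 x)) (Fin 0) /\
       Rbar_liminf (Rnbhd2 be be)
         (fun p => E (fst p) /\ E (snd p) /\ fst p < snd p)
         (fun p => Rbar_div (c1 (fst p) (snd p)) (Rbar_minus (ZEf (snd p)) (ZEf (fst p)))) = Fin 0) ) ->
  F0star a b mu sigma x0 c0 c1 = Fin 0 /\
  (forall y z, E y -> E z -> y < z ->
     ~ (forall y' z', E y' -> E z' -> y' <= z' -> Rbar_le (F y z) (F y' z'))).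
Proof.
  intros Hyp.
  assert (Hkey : Goal_eps).
  { destruct Hyp as [[al [Ha [Hn [z [Hz Hl]]]]]|[[be [Hb [Hn [y [Hy Hl]]]]]|[[al [Ha [Hn [Hc Hl]]]]|[be [Hb [Hn [Hc Hl]]]]]]].
    - exact (keyA al z Ha Hn Hz Hl).
    - exact (keyB be y Hb Hn Hy Hl).
    - exact (keyC al Ha Hn Hc Hl).
    - exact (keyD be Hb Hn Hc Hl). }
  split.
  - unfold F0star. apply Rbar_inf_eq. split.
    + intros x [y [z [Hy [Hz [Hyz ->]]]]]. destruct (Req_dec y z) as [<-|Hne].
      * unfold F0. destruct (Rlt_dec y y); [lra|]. simpl; auto.
      * destruct (F0_pos y z Hy Hz ltac:(lra)) as [->|[v [-> Hv]]]; simpl; auto; lra.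
    + intros u Hu. apply Rbar_not_lt_le'. intro Hlt.
      destruct u as [r| |]; simpl in Hlt.
      * destruct (Hkey r Hlt) as [y [z [Hy [Hz [Hyz [v [Hv Hvr]]]]]]].
        specialize (Hu (F y z) (ex_intro _ y (ex_intro _ z (conj Hy (conj Hz (conj (Rlt_le _ _ Hyz) eq_refl)))))).
        rewrite Hv in Hu. simpl in Hu. lra.
      * destruct (Hkey 1 Rlt_0_1) as [y [z [Hy [Hz [Hyz [v [Hv Hvr]]]]]]].
        specialize (Hu (F y z) (ex_intro _ y (ex_intro _ z (conj Hy (conj Hz (conj (Rlt_le _ _ Hyz) eq_refl)))))).
        rewrite Hv in Hu. simpl in Hu. exact Hu.
      * exact Hlt.
  - intros y z Hy Hz Hyz Hmin.
    destruct (F0_pos y z Hy Hz Hyz) as [Hinf|[v0 [Hv0 Hpos]]].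
    + destruct (Hkey 1 Rlt_0_1) as [y' [z' [Hy' [Hz' [Hyz' [v [Hv Hvr]]]]]]].
      specialize (Hmin y' z' Hy' Hz' (Rlt_le _ _ Hyz')). rewrite Hinf, Hv in Hmin. exact Hmin.
    + destruct (Hkey v0 Hpos) as [y' [z' [Hy' [Hz' [Hyz' [v [Hv Hvr]]]]]]].
      specialize (Hmin y' z' Hy' Hz' (Rlt_le _ _ Hyz')). rewrite Hv0, Hv in Hmin. simpl in Hmin. lra.
Qed.

End Diff.

Theorem proposition4p4 (a b : Rbar) (mu sigma : R -> R) (x0 : R) (a_refl : Prop)
  (c0 : R -> R) (c1 : R -> R -> Rbar) :
  Setting a b mu sigma x0 a_refl ->
  ConditionA a b mu sigma x0 a_refl ->
  ConditionB a b mu sigma x0 a_refl c0 c1 ->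
  ( (* (a) *)
    (exists al : R, a = Fin al /\ natural_a a mu sigma x0 /\
       exists z, inE a b mu sigma x0 z /\
         Rbar_liminf (Rnbhd a) (fun y => inE a b mu sigma x0 y /\ y < z)
           (fun y => Rbar_div (Rbar_minus (c1 y z) (g0E a b mu sigma x0 c0 y))
                              (zetaE a b mu sigma x0 y)) = Fin 0)
    \/ (* (b) *)
    (exists be : R, b = Fin be /\ natural_b b mu sigma x0 /\
       exists y, inE a b mu sigma x0 y /\
         Rbar_liminf (Rnbhd b) (fun z => inE a b mu sigma x0 z /\ y < z)
           (fun z => Rbar_div (Rbar_plus (c1 y z) (g0E a b mu sigma x0 c0 z))
                              (zetaE a b mu sigma x0 z)) = Fin 0)
    \/ (* (c) *)
    (exists al : R, a = Fin al /\ natural_a a mu sigma x0 /\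
       filterlim (Rnbhd a) (inI a b) (fun x => Fin (c0 x)) (Fin 0) /\
       Rbar_liminf (Rnbhd2 al al)
         (fun p => inE a b mu sigma x0 (fst p) /\ inE a b mu sigma x0 (snd p) /\ fst p < snd p)
         (fun p => Rbar_div (c1 (fst p) (snd p))
                     (Rbar_minus (zetaE a b mu sigma x0 (snd p)) (zetaE a b mu sigma x0 (fst p))))
         = Fin 0)
    \/ (* (d) *)
    (exists be : R, b = Fin be /\ natural_b b mu sigma x0 /\
       filterlim (Rnbhd b) (inI a b) (fun x => Fin (c0 x)) (Fin 0) /\
       Rbar_liminf (Rnbhd2 be be)
         (fun p => inE a b mu sigma x0 (fst p) /\ inE a b mu sigma x0 (snd p) /\ fst p < snd p)
         (fun p => Rbar_div (c1 (fst p) (snd p))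
                     (Rbar_minus (zetaE a b mu sigma x0 (snd p)) (zetaE a b mu sigma x0 (fst p))))
         = Fin 0) ) ->
  F0star a b mu sigma x0 c0 c1 = Fin 0 /\
  (forall y z, inE a b mu sigma x0 y -> inE a b mu sigma x0 z -> y < z ->
     ~ (forall y' z', inE a b mu sigma x0 y' -> inE a b mu sigma x0 z' -> y' <= z' ->
          Rbar_le (F0 a b mu sigma x0 c0 c1 y z) (F0 a b mu sigma x0 c0 c1 y' z'))).
Proof.
  intros HS HA HB. exact (main_sec a b mu sigma x0 a_refl c0 c1 HS HA HB).
Qed.
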